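(* Let $G(\mathcal Y)$ and $G'(\mathcal Y')$ be developable complexes of groups over connected scwols $\mathcal Y$ and $\mathcal Y'$, and choose maximal trees $T$ and $T'$ in $\mathcal Y$ and $\mathcal Y'$. Suppose $L:D(\mathcal Y,T)\to D(\mathcal Y',T')$ is a morphism of scwols which is equivariant with respect to a group homomorphism $\Lambda:\pi_1(G(\mathcal Y),T)\to\pi_1(G'(\mathcal Y'),T')$. If there are $\sigma_0\in V(\mathcal Y)$ and $\sigma_0'\in V(\mathcal Y')$ with $L([1],\sigma_0)=([1],\sigma_0')$, then there exists a morphism of complexes of groups $\lambda:G(\mathcal Y)\to G'(\mathcal Y')$ (over a morphism $l$ with $l(\sigma_0)=\sigma_0'$) such that, using basepoints $\sigma_0$ and $\sigma_0'$, $L=L^\lambda_{T,T'}$ and $\Lambda=\Lambda^\lambda_{T,T'}$.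
   Context: Scwols. A scwol $\mathcal X$ consists of a set $V(\mathcal X)$ of vertices, a set $E(\mathcal X)$ of edges, maps $i,t:E(\mathcal X)\to V(\mathcal X)$, and a composition $(a,b)\mapsto ab\in E(\mathcal X)$ defined on $E^{(2)}(\mathcal X)=\{(a,b): i(a)=t(b)\}$, such that $i(ab)=i(b)$, $t(ab)=t(a)$, $(ab)c=a(bc)$ whenever defined, and $i(a)\neq t(a)$ for all $a$. For a vertex $\alpha$ put $i(\alpha)=t(\alpha)=\alpha$; ''$\alpha\in\mathcal X$'' means $\alpha\in V(\mathcal X)\sqcup E(\mathcal X)$. The geometric realization $|\mathcal X|$ has one $k$-simplex for each sequence of $k$ composable edges; $\mathcal X$ is connected if $|\mathcal X|$ is. A maximal tree in $\mathcal X$ means a maximal tree in the 1-skeleton of $|\mathcal X|$. A morphism of scwols sends vertices to vertices and edges to edges and commutes with $i$, $t$ and composition. Complexes of groups. A complex of groups $G(\mathcal Y)=(G_\sigma,\psi_a,g_{a,b})$ over $\mathcal Y$ consists of groups $G_\sigma$, injective homomorphisms $\psi_a:G_{i(a)}\to G_{t(a)}$ and elements $g_{a,b}\in G_{t(a)}$ ($(a,b)\in E^{(2)}(\mathcal Y)$) with $\mathrm{Ad}(g_{a,b})\psi_{ab}=\psi_a\psi_b$ and $\psi_a(g_{b,c})g_{a,bc}=g_{a,b}g_{ab,c}$. A morphism $\phi=(\phi_\sigma,\phi(a)):G(\mathcal Y)\to G'(\mathcal Y')$ over a morphism of scwols $l$ consists of homomorphisms $\phi_\sigma:G_\sigma\to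 G'_{l(\sigma)}$ and elements $\phi(a)\in G'_{t(l(a))}$ with $\mathrm{Ad}(\phi(a))\psi'_{l(a)}\phi_{i(a)}=\phi_{t(a)}\psi_a$ and $\phi_{t(a)}(g_{a,b})\phi(ab)=\phi(a)\psi'_{l(a)}(\phi(b))g'_{l(a),l(b)}$. A complex of groups is developable if it is isomorphic to the complex of groups associated to some action of a group $G$ on a scwol $\mathcal X$ (local groups the stabilizers of chosen lifts $\bar\sigma$ of vertices of $\mathcal Y=G\backslash\mathcal X$, $\psi_a=\mathrm{Ad}(h_a)$, $g_{a,b}=h_ah_bh_{ab}^{-1}$ for chosen $h_a\in G$ with $h_a\cdot t(\bar a)=\overline{t(a)}$, $\bar a$ the lift of $a$ with $i(\bar a)=\overline{i(a)}$). Fundamental group and universal cover. The universal group $FG(\mathcal Y)$ is generated by $\bigsqcup_\sigma G_\sigma$ and symbols $a^+,a^-$ ($a\in E(\mathcal Y)$) subject to: the relations of each $G_\sigma$; $(a^\pm)^{-1}=a^\mp$; $a^+b^+=g_{a,b}(ab)^+$; $\psi_a(g)=a^+ga^-$ for $g\in G_{i(a)}$. $\pi_1(G(\mathcal Y),T)$ is the quotient of $FG(\mathcal Y)$ by $a^+=1$ for $a$ in $T$; $\iota_T$ sends $g\in G_\sigma$ to its image and $a$ to the image of $a^+$. The universal cover $D(\mathcal Y,T)$ has vertices $([g],\sigma)$, $[g]\in\pi_1(G(\mathcal Y),T)/\iota_T(G_\sigma)$, edges $([g],a)$, $[g]\in\pi_1(G(\mathcal Y),T)/\iota_T(G_{i(a)})$,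 $i([g],a)=([g],i(a))$, $t([g],a)=([g\,\iota_T(a)^{-1}],t(a))$, $([g],a)([h],b)=([h],ab)$ when $g^{-1}h\,\iota_T(b)^{-1}\in\iota_T(G_{i(a)})$; $\pi_1(G(\mathcal Y),T)$ acts by left multiplication. Induced maps. For a morphism $\lambda$ over $l$ with basepoint $\sigma_0\in V(\mathcal Y)$, $\sigma_0'=l(\sigma_0)$: oriented edges satisfy $i(a^+)=t(a)$, $t(a^+)=i(a)$, $i(a^-)=i(a)$, $t(a^-)=t(a)$. For $\sigma\in V(\mathcal Y)$ let $(e_1,\dots,e_n)$ be the unique edge path of oriented edges in $T$ without backtracking from $\sigma_0$ to $\sigma$ and $\pi_\sigma=e_1\cdots e_n\in FG(\mathcal Y)$; define $\pi'_{\sigma'}$ likewise. The homomorphism $\kappa_T:\pi_1(G(\mathcal Y),T)\to FG(\mathcal Y)$, $g\mapsto\pi_\sigma g\pi_\sigma^{-1}$ ($g\in G_\sigma$), $a^+\mapsto\pi_{t(a)}a^+\pi_{i(a)}^{-1}$, is an isomorphism onto the subgroup $\pi_1(G(\mathcal Y),\sigma_0)$ of elements represented by words $g_0e_1g_1\cdots e_ng_n$ with $(e_1,\dots,e_n)$ an edge path from $\sigma_0$ to $\sigma_0$, $g_0\in G_{\sigma_0}$, $g_j\in G_{t(e_j)}$; similarly $\kappa'_{T'}$. Let $F\lambda:FG(\mathcal Y)\to FG'(\mathcal Y')$ be $g\mapsto\lambda_\sigma(g)$, $a^+\mapsto\lambda(a)\,l(a)^+$. Define $\Lambda^\lambda_{T,T'}=\kappa'^{-1}_{T'}\circ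 F\lambda\circ\kappa_T$, $u_\sigma=\kappa'^{-1}_{T'}(F\lambda(\pi_\sigma)\,\pi'^{-1}_{l(\sigma)})$, and $L^\lambda_{T,T'}:D(\mathcal Y,T)\to D(\mathcal Y',T')$, $([g],\alpha)\mapsto([\Lambda^\lambda_{T,T'}(g)u_{i(\alpha)}],l(\alpha))$. *)

(* Defs.v *)
From Stdlib Require Import List Relations ClassicalEpsilon.
Import ListNotations.
Set Implicit Arguments.
Unset Strict Implicit.

Definition quot {T : Type} (R : T -> T -> Prop) : Type :=
  {P : T -> Prop | exists x, P = R x}.

Definition cls {T : Type} (R : T -> T -> Prop) (x : T) : quot R :=
  exist (fun P => exists y, P = R y) (R x) (ex_intro (fun y => R x = R y) x eq_refl).

Definition rep {T : Type} {R : T -> T -> Prop} (q : quot R) : T :=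
  proj1_sig (constructive_indefinite_description _ (proj2_sig q)).

(* "the element satisfying P" (any one if several, default if none) *)
Definition choose {A : Type} (a : A) (P : A -> Prop) : A := epsilon (inhabits a) P.

Record grp := Grp { gcar :> Type; gop : gcar -> gcar -> gcar; gid : gcar; ginvg : gcar -> gcar }.
Arguments gop : clear implicits.
Arguments gid : clear implicits.
Arguments ginvg : clear implicits.

Definition is_grp (G : grp) : Prop :=
  (forall x y z, gop G (gop G x y) z = gop G x (gop G y z)) /\
  (forall x, gop G (gid G) x = x /\ gop G x (gid G) = x) /\
  (forall x, gop G (ginvg G x) x = gid G /\ gop G x (ginvg G x) = gid G).

(* Scwols.  Composition is a total function; only its values on
   composable pairs (ini a = ter b) are meaningful.                    *)

Record scwol := Scwol {
  V : Type; E : Type;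
  ini : E -> V; ter : E -> V;
  cmp : E -> E -> E }.
Arguments ini {s} _.
Arguments ter {s} _.
Arguments cmp {s} _ _.

Definition composable (X : scwol) (a b : E X) : Prop := ini a = ter b.

Definition is_scwol (X : scwol) : Prop :=
  (forall a b : E X, composable a b -> ini (cmp a b) = ini b /\ ter (cmp a b) = ter a) /\
  (forall a b c : E X, composable a b -> composable b c ->
       cmp (cmp a b) c = cmp a (cmp b c)) /\
  (forall a : E X, ini a <> ter a).

Record scwol_mor (X X' : scwol) := Smor { mV : V X -> V X'; mE : E X -> E X' }.
Arguments mV {X X'} _ _.
Arguments mE {X X'} _ _.

Definition is_scwol_mor (X X' : scwol) (l : scwol_mor X X') : Prop :=
  (forall a, ini (mE l a) = mV l (ini a)) /\
  (forall a, ter (mE l a) = mV l (ter a)) /\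
  (forall a b, composable a b -> mE l (cmp a b) = cmp (mE l a) (mE l b)).

(* Oriented edges: (a,true) is a^+ with i(a^+)=t(a), t(a^+)=i(a);
   (a,false) is a^- with i(a^-)=i(a), t(a^-)=t(a). *)
Definition oedge (X : scwol) : Type := (E X * bool)%type.
Definition oi (X : scwol) (e : oedge X) : V X := if snd e then ter (fst e) else ini (fst e).
Definition ot (X : scwol) (e : oedge X) : V X := if snd e then ini (fst e) else ter (fst e).

Fixpoint is_path (X : scwol) (u v : V X) (p : list (oedge X)) : Prop :=
  match p with
  | [] => u = v
  | e :: p' => oi e = u /\ is_path (ot e) v p'
  end.

Fixpoint no_backtrack (X : scwol) (p : list (oedge X)) : Prop :=
  match p with
  | [] => True
  | e1 :: p' =>
      match p' with
      | [] => True
      | e2 :: _ => ~ (fst e2 = fst e1 /\ snd e2 = negb (snd e1)) /\ no_backtrack p'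
      end
  end.

Definition in_sub (X : scwol) (T : E X -> Prop) (p : list (oedge X)) : Prop :=
  Forall (fun e => T (fst e)) p.

(* |X| is connected iff its 1-skeleton (vertices V X, one 1-cell per edge) is. *)
Definition connected (X : scwol) : Prop :=
  forall u v : V X, exists p, is_path u v p.

(* A tree in the 1-skeleton: vertex set W, edge set T. *)
Definition is_tree (X : scwol) (W : V X -> Prop) (T : E X -> Prop) : Prop :=
  (exists v, W v) /\
  (forall a, T a -> W (ini a) /\ W (ter a)) /\
  (forall u v, W u -> W v -> exists p, is_path u v p /\ in_sub T p) /\
  (forall u p, is_path u u p -> in_sub T p -> no_backtrack p -> p = []).

Definition maximal_tree (X : scwol) (T : E X -> Prop) : Prop :=
  exists W, is_tree W T /\
    forall W' T', is_tree W' T' -> (forall v, W v -> W' v) -> (forall a, T a -> T' a) ->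
      (forall v, W' v -> W v) /\ (forall a, T' a -> T a).

(* The family (G_sigma) is encoded as a bundle:
   a type Gel of all local group elements with loc : Gel -> V Y, so that
   G_sigma = {x | loc x = sigma} (the disjoint union of the G_sigma).  *)

Record cog (Y : scwol) := Cog {
  Gel : Type;
  loc : Gel -> V Y;
  gmul : Gel -> Gel -> Gel;
  gone : V Y -> Gel;
  ginv : Gel -> Gel;
  psi : E Y -> Gel -> Gel;
  twist : E Y -> E Y -> Gel }.
Arguments Gel {Y} _.
Arguments loc {Y c} _.
Arguments gmul {Y c} _ _.
Arguments gone {Y} c _.
Arguments ginv {Y c} _.
Arguments psi {Y c} _ _.
Arguments twist {Y c} _ _.

Definition is_cog (Y : scwol) (C : cog Y) : Prop :=
  (forall s, loc (gone C s) = s) /\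
  (forall x y : Gel C, loc x = loc y -> loc (gmul x y) = loc x) /\
  (forall x : Gel C, loc (ginv x) = loc x) /\
  (forall x y z : Gel C, loc x = loc y -> loc y = loc z ->
       gmul (gmul x y) z = gmul x (gmul y z)) /\
  (forall x : Gel C, gmul (gone C (loc x)) x = x /\ gmul x (gone C (loc x)) = x) /\
  (forall x : Gel C, gmul (ginv x) x = gone C (loc x) /\ gmul x (ginv x) = gone C (loc x)) /\
  (forall a (x : Gel C), loc x = ini a -> loc (psi a x) = ter a) /\
  (forall a (x y : Gel C), loc x = ini a -> loc y = ini a ->
       psi a (gmul x y) = gmul (psi a x) (psi a y)) /\
  (forall a (x y : Gel C), loc x = ini a -> loc y = ini a -> psi a x = psi a y -> x = y) /\
  (forall a b, composable a b -> loc (twist (c:=C) a b) = ter a) /\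
  (forall a b (x : Gel C), composable a b -> loc x = ini b ->
       gmul (gmul (twist a b) (psi (cmp a b) x)) (ginv (twist a b)) = psi a (psi b x)) /\
  (forall a b c, composable a b -> composable b c ->
       gmul (psi a (twist b c)) (twist (c:=C) a (cmp b c))
       = gmul (twist a b) (twist (cmp a b) c)).

Record cog_mor (Y Y' : scwol) (C : cog Y) (C' : cog Y') := Cmor {
  phi : Gel C -> Gel C';
  phiE : E Y -> Gel C' }.
Arguments phi {Y Y' C C'} _ _.
Arguments phiE {Y Y' C C'} _ _.

Definition is_cog_mor (Y Y' : scwol) (C : cog Y) (C' : cog Y')
    (l : scwol_mor Y Y') (m : cog_mor C C') : Prop :=
  (forall x : Gel C, loc (phi m x) = mV l (loc x)) /\
  (forall x y : Gel C, loc x = loc y -> phi m (gmul x y) = gmul (phi m x) (phi m y)) /\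
  (forall a, loc (phiE m a) = ter (mE l a)) /\
  (forall a (x : Gel C), loc x = ini a ->
     gmul (gmul (phiE m a) (psi (mE l a) (phi m x))) (ginv (phiE m a)) = phi m (psi a x)) /\
  (forall a b, composable a b ->
     gmul (phi m (twist a b)) (phiE m (cmp a b))
     = gmul (gmul (phiE m a) (psi (mE l a) (phiE m b))) (twist (mE l a) (mE l b))).

Definition is_action (G : grp) (X : scwol) (aV : G -> V X -> V X) (aE : G -> E X -> E X) : Prop :=
  (forall v, aV (gid G) v = v) /\ (forall a, aE (gid G) a = a) /\
  (forall g h v, aV (gop G g h) v = aV g (aV h v)) /\
  (forall g h a, aE (gop G g h) a = aE g (aE h a)) /\
  (forall g a, ini (aE g a) = aV g (ini a)) /\
  (forall g a, ter (aE g a) = aV g (ter a)) /\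
  (forall g a b, composable a b -> aE g (cmp a b) = cmp (aE g a) (aE g b)) /\
  (forall g a, aV g (ini a) <> ter a) /\
  (forall g a, aV g (ini a) = ini a -> aE g a = a).

(* C is developable: C is isomorphic (over an identification Y = G\X given
   by the quotient map p) to the complex of groups associated to an action
   of a group G on a scwol X, with lifts sigma-bar, a-bar and elements h_a:
   local groups Stab(sigma-bar), psi_a = Ad(h_a), g_{a,b} = h_a h_b h_{ab}^{-1}. *)
Definition developable (Y : scwol) (C : cog Y) : Prop :=
  exists (G : grp) (X : scwol) (aV : G -> V X -> V X) (aE : G -> E X -> E X)
         (p : scwol_mor X Y) (lift : V Y -> V X) (elift : E Y -> E X) (h : E Y -> G)
         (f : Gel C -> G) (fE : E Y -> G),
    is_grp G /\ is_scwol X /\ is_action aV aE /\ is_scwol_mor p /\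
    (* p identifies Y with the quotient G\X *)
    (forall u v, mV p u = mV p v <-> exists g, aV g u = v) /\
    (forall a b, mE p a = mE p b <-> exists g, aE g a = b) /\
    (forall s, mV p (lift s) = s) /\
    (forall a, mE p (elift a) = a /\ ini (elift a) = lift (ini a)) /\
    (forall a, aV (h a) (ter (elift a)) = lift (ter a)) /\
    (* (f, fE) is an isomorphism of complexes of groups over the identity *)
    (forall x, aV (f x) (lift (loc x)) = lift (loc x)) /\
    (forall x y : Gel C, loc x = loc y -> f (gmul x y) = gop G (f x) (f y)) /\
    (forall x y : Gel C, loc x = loc y -> f x = f y -> x = y) /\
    (forall s g, aV g (lift s) = lift s -> exists x, loc x = s /\ f x = g) /\
    (forall a, aV (fE a) (lift (ter a)) = lift (ter a)) /\
    (forall a (x : Gel C), loc x = ini a ->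
       gop G (gop G (fE a) (gop G (gop G (h a) (f x)) (ginvg G (h a)))) (ginvg G (fE a))
       = f (psi a x)) /\
    (forall a b, composable a b ->
       gop G (f (twist a b)) (fE (cmp a b))
       = gop G (gop G (fE a) (gop G (gop G (h a) (fE b)) (ginvg G (h a))))
               (gop G (gop G (h a) (h b)) (ginvg G (h (cmp a b))))).

Definition word (A : Type) : Type := list (A * bool).   (* true = formal inverse *)
Definition winv {A : Type} (w : word A) : word A :=
  rev (map (fun x => (fst x, negb (snd x))) w).

Inductive pstep {A : Type} (rels : word A -> word A -> Prop) : word A -> word A -> Prop :=
| ps_red u v x b : pstep rels (u ++ (x, b) :: (x, negb b) :: v) (u ++ v)
| ps_rel u v l r : rels l r -> pstep rels (u ++ l ++ v) (u ++ r ++ v).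

Definition peq {A : Type} (rels : word A -> word A -> Prop) : word A -> word A -> Prop :=
  clos_refl_sym_trans (word A) (pstep rels).

Definition pgrp {A : Type} (rels : word A -> word A -> Prop) : Type := quot (peq rels).

Definition pmul {A} {rels : word A -> word A -> Prop} (g h : pgrp rels) : pgrp rels :=
  cls (peq rels) (rep g ++ rep h).
Definition pone {A} (rels : word A -> word A -> Prop) : pgrp rels := cls (peq rels) [].
Definition pinv {A} {rels : word A -> word A -> Prop} (g : pgrp rels) : pgrp rels :=
  cls (peq rels) (winv (rep g)).

Definition wmap {A B : Type} (f : A -> word B) (w : word A) : word B :=
  flat_map (fun x : A * bool => if snd x then winv (f (fst x)) else f (fst x)) w.

Section Fundamental.
Variables (Y : scwol) (C : cog Y).

Definition letter : Type := (Gel C + E Y)%type.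
Definition gen (x : Gel C) : word letter := [(inl x, false)].
Definition eplus (a : E Y) : word letter := [(inr a, false)].
Definition eminus (a : E Y) : word letter := [(inr a, true)].

(* relations of FG(Y); the relations of each G_sigma are given by its
   multiplication table *)
Definition FGrel (l r : word letter) : Prop :=
  (exists x y : Gel C, loc x = loc y /\ l = gen x ++ gen y /\ r = gen (gmul x y)) \/
  (exists a b, composable a b /\ l = eplus a ++ eplus b /\ r = gen (twist a b) ++ eplus (cmp a b)) \/
  (exists a (x : Gel C), loc x = ini a /\ l = gen (psi a x) /\ r = eplus a ++ gen x ++ eminus a).

Definition FG : Type := pgrp FGrel.

Definition pi1rel (T : E Y -> Prop) (l r : word letter) : Prop :=
  FGrel l r \/ (exists a, T a /\ l = eplus a /\ r = []).

Definition pi1 (T : E Y -> Prop) : Type := pgrp (pi1rel T).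

(* the unique edge path without backtracking in T from s0 to s *)
Definition tpath (T : E Y -> Prop) (s0 s : V Y) : list (oedge Y) :=
  choose [] (fun p => is_path s0 s p /\ no_backtrack p /\ in_sub T p).

Definition oword (e : oedge Y) : word letter :=
  if snd e then eplus (fst e) else eminus (fst e).

Definition piw (T : E Y -> Prop) (s0 s : V Y) : word letter := flat_map oword (tpath T s0 s).

Definition kappa_letter (T : E Y -> Prop) (s0 : V Y) (x : letter) : word letter :=
  match x with
  | inl g => piw T s0 (loc g) ++ gen g ++ winv (piw T s0 (loc g))
  | inr a => piw T s0 (ter a) ++ eplus a ++ winv (piw T s0 (ini a))
  end.

Definition kappa (T : E Y -> Prop) (s0 : V Y) (g : pi1 T) : FG :=
  cls (peq FGrel) (wmap (kappa_letter T s0) (rep g)).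

Definition Dvrel (T : E Y -> Prop) (x y : word letter * V Y) : Prop :=
  snd x = snd y /\ exists g : Gel C, loc g = snd x /\ peq (pi1rel T) (fst y) (fst x ++ gen g).
Definition Derel (T : E Y -> Prop) (x y : word letter * E Y) : Prop :=
  snd x = snd y /\ exists g : Gel C, loc g = ini (snd x) /\ peq (pi1rel T) (fst y) (fst x ++ gen g).

Definition Dini (T : E Y -> Prop) (e : quot (Derel T)) : quot (Dvrel T) :=
  cls (Dvrel T) (fst (rep e), ini (snd (rep e))).
Definition Dter (T : E Y -> Prop) (e : quot (Derel T)) : quot (Dvrel T) :=
  cls (Dvrel T) (fst (rep e) ++ eminus (snd (rep e)), ter (snd (rep e))).
Definition Dcmp (T : E Y -> Prop) (e f : quot (Derel T)) : quot (Derel T) :=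
  cls (Derel T) (fst (rep f), cmp (snd (rep e)) (snd (rep f))).

Definition D (T : E Y -> Prop) : scwol :=
  Scwol (@Dini T) (@Dter T) (@Dcmp T).

Definition DactV (T : E Y -> Prop) (g : pi1 T) (v : V (D T)) : V (D T) :=
  cls (Dvrel T) (rep g ++ fst (rep v), snd (rep v)).
Definition DactE (T : E Y -> Prop) (g : pi1 T) (e : E (D T)) : E (D T) :=
  cls (Derel T) (rep g ++ fst (rep e), snd (rep e)).

End Fundamental.

Arguments gen {Y C} _.
Arguments eplus {Y C} _.
Arguments eminus {Y C} _.
Arguments FGrel {Y} C _ _.
Arguments pi1rel {Y} C T _ _.
Arguments Dvrel {Y} C T _ _.
Arguments Derel {Y} C T _ _.
Arguments kappa {Y} C T s0 _.
Arguments piw {Y} C T s0 s.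
Arguments tpath {Y} T s0 s.

Section Induced.
Variables (Y Y' : scwol) (C : cog Y) (C' : cog Y') (l : scwol_mor Y Y') (m : cog_mor C C')
          (T : E Y -> Prop) (T' : E Y' -> Prop) (s0 : V Y).

Definition Flet (x : letter C) : word (letter C') :=
  match x with
  | inl g => gen (phi m g)
  | inr a => gen (phiE m a) ++ eplus (mE l a)
  end.

Definition Flam (g : FG C) : FG C' := cls (peq (FGrel C')) (wmap Flet (rep g)).

(* Lambda^lambda = kappa'^{-1} o F lambda o kappa, basepoints s0 and l(s0) *)
Definition Lam (g : pi1 C T) : pi1 C' T' :=
  choose (pone _) (fun h => kappa C' T' (mV l s0) h = Flam (kappa C T s0 g)).

Definition ufun (s : V Y) : pi1 C' T' :=
  choose (pone _) (fun h => kappa C' T' (mV l s0) h =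
     pmul (Flam (cls (peq (FGrel C)) (piw C T s0 s)))
          (pinv (cls (peq (FGrel C')) (piw C' T' (mV l s0) (mV l s))))).

Definition LlamV (v : V (D C T)) : V (D C' T') :=
  cls (Dvrel C' T') (rep (pmul (Lam (cls _ (fst (rep v)))) (ufun (snd (rep v)))), mV l (snd (rep v))).

Definition LlamE (e : E (D C T)) : E (D C' T') :=
  cls (Derel C' T') (rep (pmul (Lam (cls _ (fst (rep e)))) (ufun (ini (snd (rep e))))),
                  mE l (snd (rep e))).

End Induced.

Arguments Lam {Y Y' C C'} l m T T' s0 g.
Arguments ufun {Y Y' C C'} l m T T' s0 s.
Arguments LlamV {Y Y' C C'} l m T T' s0 v.
Arguments LlamE {Y Y' C C'} l m T T' s0 e.

(* Main.v *)
Require Import Defs.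
From Stdlib Require Import List Relations ClassicalEpsilon Classical FunctionalExtensionality PropExtensionality ProofIrrelevance Lia.
Import ListNotations.
Set Implicit Arguments.
Unset Strict Implicit.

Ltac ls := simpl; repeat rewrite <- app_assoc; simpl; repeat rewrite <- app_assoc; simpl; try reflexivity.

Section Words.
Variable A : Type.
Variable rels : word A -> word A -> Prop.
Notation pe := (peq rels).

Lemma pe_refl w : pe w w. Proof. apply rst_refl. Qed.
Lemma pe_sym u v : pe u v -> pe v u. Proof. apply rst_sym. Qed.
Lemma pe_trans u v w : pe u v -> pe v w -> pe u w. Proof. apply rst_trans. Qed.

Lemma pstep_ctx p q u v : pstep rels u v -> pstep rels (p ++ u ++ q) (p ++ v ++ q).
Proof.
  intros H; destruct H as [u v x b|u v l r Hr].
  - replace (p ++ (u ++ (x,b)::(x,negb b)::v) ++ q) with ((p ++ u) ++ (x,b)::(x,negb b)::(v ++ q)) by ls.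
    replace (p ++ (u++v) ++ q) with ((p++u) ++ (v++q)) by ls. constructor.
  - replace (p ++ (u ++ l ++ v) ++ q) with ((p ++ u) ++ l ++ (v ++ q)) by ls.
    replace (p ++ (u ++ r ++ v) ++ q) with ((p ++ u) ++ r ++ (v ++ q)) by ls. constructor; auto.
Qed.

Lemma pe_ctx p q u v : pe u v -> pe (p ++ u ++ q) (p ++ v ++ q).
Proof.
  induction 1.
  - apply rst_step, pstep_ctx; auto.
  - apply pe_refl.
  - apply pe_sym; auto.
  - eapply pe_trans; eauto.
Qed.

Lemma pe_app u u' v v' : pe u u' -> pe v v' -> pe (u ++ v) (u' ++ v').
Proof.
  intros H1 H2. apply pe_trans with (u' ++ v).
  - generalize (pe_ctx [] v H1); simpl; auto.
  - generalize (pe_ctx u' [] H2); rewrite !app_nil_r; auto.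
Qed.

Lemma pe_rel l r : rels l r -> pe l r.
Proof.
  intros H. generalize (ps_rel [] [] H); simpl; rewrite !app_nil_r; intros; apply rst_step; auto.
Qed.

Lemma winv_app (u v : word A) : winv (u ++ v) = winv v ++ winv u.
Proof. unfold winv. rewrite map_app, rev_app_distr. auto. Qed.

Lemma winv_winv (u : word A) : winv (winv u) = u.
Proof.
  unfold winv. rewrite map_rev, rev_involutive, map_map.
  erewrite map_ext; [apply map_id|]. intros [x b]; simpl; rewrite Bool.negb_involutive; auto.
Qed.

Lemma winv_nil : @winv A [] = []. Proof. reflexivity. Qed.

Lemma winv_single (x:A) b : winv [(x,b)] = [(x, negb b)]. Proof. reflexivity. Qed.

Lemma pe_inv_r u : pe (u ++ winv u) [].
Proof.
  induction u as [|[x b] u IH]; simpl. apply pe_refl.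
  change ((x,b)::u) with ([(x,b)] ++ u). rewrite winv_app, winv_single.
  apply pe_trans with ([(x,b)] ++ [] ++ [(x,negb b)]).
  - replace ((x, b) :: u ++ winv u ++ [(x, negb b)]) with ([(x,b)] ++ (u ++ winv u) ++ [(x,negb b)]) by ls.
    apply pe_ctx; auto.
  - simpl. apply rst_step. generalize (ps_red rels [] [] x b); simpl; auto.
Qed.

Lemma pe_inv_l u : pe (winv u ++ u) [].
Proof. generalize (pe_inv_r (winv u)); rewrite winv_winv; auto. Qed.

Lemma pe_cancel_r u v w : pe (u ++ w) (v ++ w) -> pe u v.
Proof.
  intros H. apply pe_trans with (u ++ w ++ winv w).
  { generalize (pe_app (pe_refl u) (pe_sym (pe_inv_r w))); rewrite app_nil_r; auto. }
  apply pe_trans with (v ++ w ++ winv w).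
  { rewrite !app_assoc. apply pe_app; auto. apply pe_refl. }
  generalize (pe_app (pe_refl v) (pe_inv_r w)); rewrite app_nil_r; auto.
Qed.

Lemma pe_cancel_l u v w : pe (w ++ u) (w ++ v) -> pe u v.
Proof.
  intros H. apply pe_trans with (winv w ++ w ++ u).
  { generalize (pe_app (pe_sym (pe_inv_l w)) (pe_refl u)); simpl; rewrite app_assoc; auto. }
  apply pe_trans with (winv w ++ w ++ v).
  { apply pe_app; auto. apply pe_refl. }
  generalize (pe_app (pe_inv_l w) (pe_refl v)); simpl; rewrite app_assoc; auto.
Qed.

Lemma pe_winv u v : pe u v -> pe (winv u) (winv v).
Proof.
  intros H. apply pe_cancel_l with u.
  apply pe_trans with ([] : word A). apply pe_inv_r.
  apply pe_sym, pe_trans with (v ++ winv v). apply pe_app; auto. apply pe_refl. apply pe_inv_r.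
Qed.

Lemma pe_move_r u v w : pe u (v ++ w) -> pe (u ++ winv w) v.
Proof.
  intros H. apply pe_trans with (v ++ w ++ winv w).
  rewrite app_assoc. apply pe_app; auto. apply pe_refl.
  generalize (pe_app (pe_refl v) (pe_inv_r w)); rewrite app_nil_r; auto.
Qed.

Lemma pe_nil_eq u v : pe (u ++ winv v) [] -> pe u v.
Proof.
  intros H. apply pe_cancel_r with (winv v).
  apply pe_trans with ([]:word A); auto. apply pe_sym, pe_inv_r.
Qed.

End Words.
Arguments pe_refl {A rels} w.
Arguments pe_inv_r {A rels} u.
Arguments pe_inv_l {A rels} u.

Lemma peq_mono A (r1 r2 : word A -> word A -> Prop) :
  (forall l r, r1 l r -> r2 l r) -> forall u v, peq r1 u v -> peq r2 u v.
Proof.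
  intros Hr u v. induction 1.
  - apply rst_step. destruct H; constructor; auto.
  - apply rst_refl.
  - apply rst_sym; auto.
  - eapply rst_trans; eauto.
Qed.

Lemma wmap_app A B (f : A -> word B) u v : wmap f (u ++ v) = wmap f u ++ wmap f v.
Proof. unfold wmap. apply flat_map_app. Qed.

Lemma wmap_winv A B (f : A -> word B) u : wmap f (winv u) = winv (wmap f u).
Proof.
  induction u as [|[x b] u IH]; auto.
  change ((x,b)::u) with ([(x,b)] ++ u). rewrite winv_app, wmap_app, wmap_app, IH, winv_app.
  f_equal. simpl. rewrite !app_nil_r. destruct b; simpl; auto. rewrite winv_winv; auto.
Qed.

Lemma wmap_single A B (f : A -> word B) x : wmap f [(x,false)] = f x.
Proof. simpl. apply app_nil_r. Qed.

Lemma wmap_peq A B (r1 : word A -> word A -> Prop) (r2 : word B -> word B -> Prop) (f : A -> word B) :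
  (forall l r, r1 l r -> peq r2 (wmap f l) (wmap f r)) ->
  forall u v, peq r1 u v -> peq r2 (wmap f u) (wmap f v).
Proof.
  intros Hr u v. induction 1.
  - destruct H as [u v x b|u v l r H].
    + rewrite !wmap_app.
      change ((x,b)::(x,negb b)::v) with ([(x,b); (x,negb b)] ++ v). rewrite wmap_app.
      generalize (pe_ctx (wmap f u) (wmap f v) (u := wmap f [(x, b); (x, negb b)]) (v := []) (rels := r2)).
      simpl. intros H; apply H. rewrite app_nil_r. destruct b; simpl; rewrite ?winv_winv.
      * apply pe_inv_l.
      * apply pe_inv_r.
    + rewrite !wmap_app. apply pe_ctx. auto.
  - apply pe_refl.
  - apply pe_sym; auto.
  - eapply pe_trans; eauto.
Qed.

Lemma wmap_ext_peq A B (r : word B -> word B -> Prop) (f g : A -> word B) :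
  (forall x, peq r (f x) (g x)) -> forall u, peq r (wmap f u) (wmap g u).
Proof.
  intros H u. induction u as [|[x b] u IH]. apply pe_refl.
  change ((x,b)::u) with ([(x,b)] ++ u). rewrite !wmap_app. apply pe_app; auto.
  simpl. rewrite !app_nil_r. destruct b; auto. apply pe_winv; auto.
Qed.

Section Quot.
Variables (T0 : Type) (R : T0 -> T0 -> Prop).
Hypotheses (Rr : forall x, R x x) (Rs : forall x y, R x y -> R y x)
  (Rt : forall x y z, R x y -> R y z -> R x z).

Lemma quot_ext (q1 q2 : quot R) : proj1_sig q1 = proj1_sig q2 -> q1 = q2.
Proof. destruct q1, q2; simpl; intros ->; f_equal; apply proof_irrelevance. Qed.

Lemma rep_spec (q : quot R) : proj1_sig q = R (rep q).
Proof. unfold rep. destruct (constructive_indefinite_description _ _) as [y Hy]; simpl; auto. Qed.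

Lemma rep_cls x : R x (rep (cls R x)).
Proof. generalize (rep_spec (cls R x)); simpl; intros H; rewrite H; apply Rr. Qed.

Lemma cls_rep q : cls R (rep q) = q.
Proof. apply quot_ext; simpl. rewrite rep_spec; auto. Qed.

Lemma cls_eq x y : R x y -> cls R x = cls R y.
Proof.
  intros H. apply quot_ext; simpl. apply functional_extensionality; intros z.
  apply propositional_extensionality; split; intros; eauto.
Qed.

Lemma cls_inj x y : cls R x = cls R y -> R x y.
Proof. intros H. apply (f_equal (@proj1_sig _ _)) in H; simpl in H. rewrite H; apply Rr. Qed.
End Quot.

Section PQuot.
Variable A : Type.
Variable rels : word A -> word A -> Prop.
Notation pe := (peq rels).
Lemma pe_equiv_r : forall x, pe x x. Proof. apply pe_refl. Qed.
Lemma prep_cls x : pe x (rep (cls pe x)).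
Proof. apply rep_cls; intros; solve [apply pe_refl | apply pe_sym; auto | eapply pe_trans; eauto]. Qed.
Lemma pcls_rep q : cls pe (rep q) = q.
Proof. apply cls_rep; intros; solve [apply pe_refl | apply pe_sym; auto | eapply pe_trans; eauto]. Qed.
Lemma pcls_eq x y : pe x y -> cls pe x = cls pe y.
Proof. apply cls_eq; intros; solve [apply pe_refl | apply pe_sym; auto | eapply pe_trans; eauto]. Qed.
Lemma pcls_inj x y : cls pe x = cls pe y -> pe x y.
Proof. apply cls_inj; intros; apply pe_refl. Qed.

Lemma pmul_cls u v : pmul (cls pe u) (cls pe v) = cls pe (u ++ v).
Proof. unfold pmul. apply pcls_eq. apply pe_app; apply pe_sym, prep_cls. Qed.
Lemma rep_pmul (g h : pgrp rels) : pe (rep (pmul g h)) (rep g ++ rep h).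
Proof. unfold pmul. apply pe_sym, prep_cls. Qed.
Lemma rep_pinv (g : pgrp rels) : pe (rep (pinv g)) (winv (rep g)).
Proof. unfold pinv. apply pe_sym, prep_cls. Qed.
Lemma rep_pone : pe (rep (pone rels)) [].
Proof. unfold pone. apply pe_sym, prep_cls. Qed.
End PQuot.

Section Ev.
Variable G : grp.
Hypothesis HG : is_grp G.
Variable A : Type.
Variable f : A -> G.
Definition ev (w : word A) : G :=
  fold_right (fun (x : A * bool) (acc : gcar G) => gop G (if snd x then ginvg G (f (fst x)) else f (fst x)) acc) (gid G) w.

Lemma g_assoc (x y z : G) : gop G (gop G x y) z = gop G x (gop G y z). Proof. apply HG. Qed.
Lemma g_idl (x : G) : gop G (gid G) x = x. Proof. apply HG. Qed.
Lemma g_idr (x : G) : gop G x (gid G) = x. Proof. apply HG. Qed.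
Lemma g_invl (x : G) : gop G (ginvg G x) x = gid G. Proof. apply HG. Qed.
Lemma g_invr (x : G) : gop G x (ginvg G x) = gid G. Proof. apply HG. Qed.

Lemma ev_app u v : ev (u ++ v) = gop G (ev u) (ev v).
Proof.
  induction u as [|x u IH]; simpl. rewrite g_idl; auto.
  rewrite IH, g_assoc; auto.
Qed.

Lemma ev_peq (rels : word A -> word A -> Prop) :
  (forall l r, rels l r -> ev l = ev r) -> forall u v, peq rels u v -> ev u = ev v.
Proof.
  intros Hr u v. induction 1; auto; [|congruence].
  destruct H as [u v x b|u v l r H]; rewrite !ev_app; simpl; f_equal; auto.
  rewrite <- g_assoc. destruct b; simpl; rewrite ?g_invl, ?g_invr, g_idl; auto.
  rewrite (Hr _ _ H); auto.
Qed.
End Ev.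

Section Cog.
Variables (Y : scwol) (C : cog Y).
Hypothesis HY : is_scwol Y.
Hypothesis HC : is_cog C.

Lemma c_loc_one s : loc (gone C s) = s. Proof. apply HC. Qed.
Lemma c_loc_mul (x y : Gel C) : loc x = loc y -> loc (gmul x y) = loc x. Proof. apply HC. Qed.
Lemma c_loc_inv (x : Gel C) : loc (ginv x) = loc x. Proof. apply HC. Qed.
Lemma c_idl (x : Gel C) : gmul (gone C (loc x)) x = x. Proof. apply HC. Qed.
Lemma c_invr (x : Gel C) : gmul x (ginv x) = gone C (loc x). Proof. apply HC. Qed.
Lemma c_loc_psi a (x : Gel C) : loc x = ini a -> loc (psi a x) = ter a. Proof. apply HC. Qed.
Lemma c_loc_twist a b : composable a b -> loc (twist (c:=C) a b) = ter a. Proof. apply HC. Qed.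

Notation Fe := (peq (FGrel C)).

Lemma gen_mul (x y : Gel C) : loc x = loc y -> Fe (gen x ++ gen y) (gen (gmul x y)).
Proof. intros H. apply pe_rel. left. eauto. Qed.

Lemma gen_one s : Fe (gen (gone C s)) [].
Proof.
  apply pe_cancel_l with (gen (gone C s)). rewrite app_nil_r.
  eapply pe_trans. apply gen_mul; auto.
  assert (E : gmul (gone C s) (gone C s) = gone C s).
  { generalize (c_idl (gone C s)). rewrite c_loc_one. auto. }
  rewrite E. apply pe_refl.
Qed.

Lemma gen_inv (x : Gel C) : Fe (gen (ginv x)) (winv (gen x)).
Proof.
  apply pe_cancel_l with (gen x). eapply pe_trans. apply gen_mul. rewrite c_loc_inv; auto.
  rewrite c_invr. eapply pe_trans. apply gen_one. apply pe_sym, pe_inv_r.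
Qed.

Lemma conj_plus a (x : Gel C) : loc x = ini a -> Fe (eplus a ++ gen x) (gen (psi a x) ++ eplus a).
Proof.
  intros H. apply pe_sym. eapply pe_trans. apply pe_app. apply pe_rel. right; right. exists a, x; eauto.
  apply pe_refl. simpl. unfold eplus, gen. 
  generalize (pe_ctx [(inr a, false); (inl x, false)] [] (pe_inv_l (rels := FGrel C) (eplus a))).
  simpl. auto.
Qed.

Lemma conj_minus a (x : Gel C) : loc x = ini a -> Fe (gen x ++ eminus a) (eminus a ++ gen (psi a x)).
Proof.
  intros H. apply pe_cancel_l with (eplus a). rewrite app_assoc.
  eapply pe_trans. apply pe_app. apply conj_plus; auto. apply pe_refl.
  unfold eplus, eminus, gen. simpl.
  apply pe_sym. eapply pe_trans. apply rst_step. apply (ps_red _ [] _ (inr a) false). simpl.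
  apply pe_sym. eapply pe_trans. apply rst_step. apply (ps_red _ [(inl (psi a x), false)] [] (inr a) false). simpl. apply pe_refl.
Qed.

Lemma twist_rel a b : composable a b -> Fe (eplus a ++ eplus b) (gen (twist a b) ++ eplus (cmp a b)).
Proof. intros H. apply pe_rel. right; left. eauto. Qed.

Fixpoint tpw (u v : V Y) (w : word (letter C)) : Prop :=
  match w with
  | [] => u = v
  | (inl g, _) :: w' => loc g = u /\ tpw u v w'
  | (inr a, false) :: w' => u = ter a /\ tpw (ini a) v w'
  | (inr a, true) :: w' => u = ini a /\ tpw (ter a) v w'
  end.

Lemma tpw_app u m v w1 w2 : tpw u m w1 -> tpw m v w2 -> tpw u v (w1 ++ w2).
Proof.
  revert u; induction w1 as [|[[g|a] b] w1 IH]; simpl; intros u H1 H2.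
  - subst; auto.
  - destruct H1; split; eauto.
  - destruct b; destruct H1; split; eauto.
Qed.

Lemma tpw_app_inv u v w1 w2 : tpw u v (w1 ++ w2) -> exists m, tpw u m w1 /\ tpw m v w2.
Proof.
  revert u; induction w1 as [|[[g|a] b] w1 IH]; simpl; intros u H.
  - eauto.
  - destruct H as [H1 H2]. destruct (IH _ H2) as [m [? ?]]; eauto.
  - destruct b; destruct H as [H1 H2]; destruct (IH _ H2) as [m [? ?]]; eauto.
Qed.

Lemma tpw_winv u v w : tpw u v w -> tpw v u (winv w).
Proof.
  revert u; induction w as [|[[g|a] b] w IH]; simpl; intros u H.
  - subst; reflexivity.
  - destruct H as [H1 H2]. change ((inl g, b) :: w) with ([(inl g, b)] ++ w).
    rewrite winv_app. apply tpw_app with u; auto. simpl; auto.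
  - change ((inr a, b) :: w) with ([(inr a, b)] ++ w). rewrite winv_app.
    destruct b; destruct H as [H1 H2]; subst; eapply tpw_app; eauto; simpl; auto.
Qed.

Lemma tpw_path u v p : is_path u v p -> tpw u v (flat_map (oword C) p).
Proof.
  revert u; induction p as [|[a b] p IH]; simpl; intros u H; auto.
  destruct H as [H1 H2]. unfold oi, ot in *; simpl in *.
  destruct b; unfold oword, eplus, eminus; simpl; split; auto.
Qed.

Lemma FGrel_typed l r : FGrel C l r -> exists u v, tpw u v l /\ tpw u v r.
Proof.
  intros [[x [y [Hl [-> ->]]]]|[[a [b [Hab [-> ->]]]]|[a [x [Hx [-> ->]]]]]]; simpl.
  - exists (loc x), (loc x). rewrite c_loc_mul; auto.
  - destruct HY as [Hs _]. destruct (Hs a b Hab) as [Hi Ht].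
    exists (ter a), (ini b). rewrite c_loc_twist, Hi, Ht; auto.
  - exists (ter a), (ter a). rewrite c_loc_psi; auto.
Qed.

Section Conj.
Variables (B : Type) (r2 : word B -> word B -> Prop) (Af : V Y -> word B) (M : letter C -> word B).
Definition cm (x : letter C) : word B :=
  match x with
  | inl g => Af (loc g) ++ M x ++ winv (Af (loc g))
  | inr a => Af (ter a) ++ M x ++ winv (Af (ini a))
  end.

Lemma cancel_mid (p q z : word B) : peq r2 (p ++ winv q ++ q ++ z) (p ++ z).
Proof. generalize (pe_ctx p z (pe_inv_l (rels := r2) q)); simpl; rewrite !app_assoc; auto. Qed.

Lemma cm_tele u v w : tpw u v w -> peq r2 (wmap cm w) (Af u ++ wmap M w ++ winv (Af v)).
Proof.
  revert u; induction w as [|[x b] w IH]; intros u H.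
  - simpl in H; subst. simpl. apply pe_sym, pe_inv_r.
  - change ((x,b)::w) with ([(x,b)] ++ w). rewrite !wmap_app.
    assert (Hx : exists m, tpw u m [(x,b)] /\ tpw m v w /\ cm x = Af (if b then m else u) ++ M x ++ winv (Af (if b then u else m))).
    { destruct x as [g|a]; simpl in H.
      - destruct H; subst. exists (loc g). simpl. destruct b; auto.
      - destruct b; destruct H; subst; eexists; simpl; eauto. }
    destruct Hx as [m [_ [Hw Hc]]].
    eapply pe_trans. apply pe_app. apply pe_refl. apply IH; eauto.
    simpl. rewrite !app_nil_r. destruct b; rewrite Hc.
    + rewrite !winv_app, winv_winv.
      generalize (cancel_mid (Af u ++ winv (M x)) (Af m) (wmap M w ++ winv (Af v))); ls; auto.
    + generalize (cancel_mid (Af u ++ M x) (Af m) (wmap M w ++ winv (Af v))); ls; auto.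
Qed.

Lemma cm_rel l r : FGrel C l r -> peq r2 (wmap M l) (wmap M r) -> peq r2 (wmap cm l) (wmap cm r).
Proof.
  intros H HM. destruct (FGrel_typed H) as [u [v [Hl Hr]]].
  eapply pe_trans. apply cm_tele; eauto. apply pe_sym.
  eapply pe_trans. apply cm_tele; eauto. apply pe_ctx. apply pe_sym; auto.
Qed.
End Conj.

End Cog.

Section Paths.
Variable Y : scwol.

Lemma is_path_app (u v : V Y) p q : is_path u v (p ++ q) <-> exists m, is_path u m p /\ is_path m v q.
Proof.
  revert u; induction p as [|e p IH]; simpl; intros u; split.
  - eauto.
  - intros [m [-> H]]; auto.
  - intros [H1 H2]. apply IH in H2. destruct H2 as [m [? ?]]. eauto.
  - intros [m [[H1 H2] H3]]. split; auto. apply IH; eauto.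
Qed.

Definition revp (p : list (oedge Y)) : list (oedge Y) := rev (map (fun e => (fst e, negb (snd e))) p).

Lemma oi_neg (e : oedge Y) : oi (fst e, negb (snd e)) = ot e.
Proof. destruct e as [a []]; reflexivity. Qed.
Lemma ot_neg (e : oedge Y) : ot (fst e, negb (snd e)) = oi e.
Proof. destruct e as [a []]; reflexivity. Qed.

Lemma oi_neg' (c : E Y) b : oi (c, negb b) = ot (c,b). Proof. exact (oi_neg (c,b)). Qed.
Lemma ot_neg' (c : E Y) b : ot (c, negb b) = oi (c,b). Proof. exact (ot_neg (c,b)). Qed.

Lemma revp_path u v p : is_path u v p -> is_path v u (revp p).
Proof.
  revert u; induction p as [|e p IH]; simpl; intros u H.
  - subst; reflexivity.
  - destruct H as [H1 H2]. unfold revp; simpl. apply is_path_app. exists (ot e). split.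
    apply IH; auto. simpl. rewrite oi_neg, ot_neg. auto.
Qed.

Lemma revp_sub (T : E Y -> Prop) p : in_sub T p -> in_sub T (revp p).
Proof.
  unfold in_sub, revp. intros H. apply Forall_rev. apply Forall_map.
  eapply Forall_impl; [|eauto]. simpl; auto.
Qed.

Lemma revp_word (C : cog Y) p : flat_map (oword C) (revp p) = winv (flat_map (oword C) p).
Proof.
  induction p as [|e p IH]; auto. unfold revp in *; simpl.
  rewrite flat_map_app. unfold oedge in *. rewrite IH. 
  replace (oword C e ++ flat_map (oword C) p) with (oword C e ++ flat_map (oword C) p) by reflexivity.
  rewrite winv_app. simpl. rewrite app_nil_r. f_equal. destruct e as [a []]; reflexivity.
Qed.

Lemma nbt_not (p : list (oedge Y)) : ~ no_backtrack p ->
  exists p1 e e' p2, p = p1 ++ e :: e' :: p2 /\ fst e' = fst e /\ snd e' = negb (snd e).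
Proof.
  induction p as [|e1 p IH]; simpl; intros H. tauto.
  destruct p as [|e2 p]. tauto.
  destruct (classic (fst e2 = fst e1 /\ snd e2 = negb (snd e1))) as [Hb|Hb].
  - exists [], e1, e2, p. simpl; tauto.
  - destruct IH as [p1 [e [e' [p2 [-> ?]]]]]. tauto.
    exists (e1 :: p1), e, e', p2. auto.
Qed.

Lemma reduce_path (C : cog Y) (rels : word (letter C) -> word (letter C) -> Prop) (T : E Y -> Prop) :
  forall n p u v, length p <= n -> is_path u v p -> in_sub T p ->
  exists q, is_path u v q /\ in_sub T q /\ no_backtrack q /\
            peq rels (flat_map (oword C) p) (flat_map (oword C) q).
Proof.
  induction n; intros p u v Hn Hp Hs.
  - destruct p; [|simpl in Hn; lia]. exists []; simpl; repeat split; auto. apply pe_refl.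
  - destruct (classic (no_backtrack p)) as [Hb|Hb].
    + exists p; repeat split; auto. apply pe_refl.
    + destruct (nbt_not Hb) as [p1 [e [e' [p2 [-> [H1 H2]]]]]].
      assert (Hp' : is_path u v (p1 ++ p2)).
      { apply is_path_app in Hp. destruct Hp as [m [Hp1 [Hoi [Hoe Hp2]]]].
        apply is_path_app. exists m. split; auto.
        destruct e as [a b], e' as [a' b']; simpl in *; subst.
        unfold ot, oi in *; simpl in *. destruct b; simpl in *; congruence. }
      assert (Hs' : in_sub T (p1 ++ p2)).
      { unfold in_sub in *. apply Forall_app in Hs. destruct Hs as [Ha Hs].
        apply Forall_app; split; auto. do 2 apply Forall_inv_tail in Hs. auto. }
      destruct (IHn (p1 ++ p2) u v) as [q [? [? [? Hq]]]]; auto.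
      { rewrite length_app in *; simpl in *; lia. }
      exists q; repeat split; auto.
      eapply pe_trans; [|apply Hq].
      rewrite !flat_map_app. simpl.
      destruct e as [a b], e' as [a' b']; simpl in *; subst.
      destruct b; unfold oword, eplus, eminus; simpl; apply rst_step;
        [apply (ps_red rels (flat_map (oword C) p1) (flat_map (oword C) p2) (inr a) false)
        |apply (ps_red rels (flat_map (oword C) p1) (flat_map (oword C) p2) (inr a) true)].
Qed.

End Paths.

Section Tree.
Variable Y : scwol.
Hypothesis HY : is_scwol Y.

Lemma ini_ne_ter (a : E Y) : ini a <> ter a. Proof. apply HY. Qed.

Lemma oi_orient (c : E Y) b1 b2 : oi (c,b1) = oi (c,b2) -> b1 = b2.
Proof. unfold oi; simpl. destruct b1, b2; auto; intros H; exfalso; apply (@ini_ne_ter c); auto. Qed.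
Lemma ot_orient (c : E Y) b1 b2 : ot (c,b1) = ot (c,b2) -> b1 = b2.
Proof. unfold ot; simpl. destruct b1, b2; auto; intros H; exfalso; apply (@ini_ne_ter c); auto. Qed.

Lemma oi_ends (e : oedge Y) : oi e = ini (fst e) \/ oi e = ter (fst e).
Proof. destruct e as [a []]; unfold oi; simpl; auto. Qed.
Lemma ot_ends (e : oedge Y) : ot e = ini (fst e) \/ ot e = ter (fst e).
Proof. destruct e as [a []]; unfold ot; simpl; auto. Qed.

Lemma exit_edge (W : V Y -> Prop) u v p : W u -> ~ W v -> is_path u v p ->
  exists e : oedge Y, W (oi e) /\ ~ W (ot e).
Proof.
  revert u; induction p as [|e p IH]; simpl; intros u Hu Hv Hp.
  - subst; tauto.
  - destruct Hp as [H1 H2]. destruct (classic (W (ot e))) as [Hw|Hw].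
    + eapply IH; eauto.
    + exists e; subst; auto.
Qed.

Lemma nbt_tail (e : oedge Y) p : no_backtrack (e :: p) -> no_backtrack p.
Proof. destruct p; simpl; tauto. Qed.
Lemma nbt_app_l (p q : list (oedge Y)) : no_backtrack (p ++ q) -> no_backtrack p.
Proof.
  induction p as [|e p IH]; intros H. simpl; auto.
  destruct p as [|e2 p]. simpl; auto.
  change ((e :: e2 :: p) ++ q) with (e :: ((e2 :: p) ++ q)) in H.
  change (no_backtrack (e :: e2 :: p)) with (~ (fst e2 = fst e /\ snd e2 = negb (snd e)) /\ no_backtrack (e2 :: p)).
  simpl in H. destruct H as [H1 H2]. split; auto.
Qed.

Lemma spanning (T : E Y -> Prop) : connected Y -> maximal_tree T ->
  exists W, is_tree W T /\ forall v, W v.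
Proof.
  intros Hc [W [HW Hmax]]. exists W; split; auto. intros s.
  destruct (classic (W s)) as [Hs|Hs]; auto. exfalso.
  destruct HW as [[w0 Hw0] [HTW [HWc HWt]]].
  destruct (Hc w0 s) as [p Hp].
  destruct (exit_edge Hw0 Hs Hp) as [[c b] [Hx Hy]].
  set (x := oi (c,b)) in *. set (y := ot (c,b)) in *.
  set (W' := fun z => W z \/ z = y). set (T' := fun a => T a \/ a = c).
  assert (HTy : forall a, T a -> ini a <> y /\ ter a <> y).
  { intros a Ha. destruct (HTW a Ha). split; intros E; apply Hy; rewrite <- E; auto. }
  assert (Hxy : x <> y). { intros E; rewrite E in Hx; auto. }
  assert (Hsub : forall p, in_sub T p -> in_sub T' p).
  { intros q. apply Forall_impl. unfold T'; auto. }
  assert (Havoid : forall q u v, is_path u v q -> in_sub T' q -> no_backtrack q -> u <> y -> v <> y -> in_sub T q).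
  { induction q as [|e1 q IH]; intros u v Hq Hs' Hn Hu Hv. constructor.
    destruct Hq as [Hq1 Hq2]. inversion Hs' as [|? ? He1 Hs1]; subst.
    destruct He1 as [He1|He1].
    - constructor; auto. eapply IH; eauto. eapply nbt_tail; eauto.
      destruct (HTy _ He1). destruct (ot_ends e1) as [E|E]; rewrite E; auto.
    - destruct e1 as [c1 b1]; simpl in He1; subst c1.
      assert (b1 = b).
      { destruct (Bool.bool_dec b1 b) as [|Hne]; auto. exfalso; apply Hu.
        replace b1 with (negb b) by (destruct b, b1; simpl; auto; congruence).
        exact (oi_neg (c,b)). }
      subst b1. destruct q as [|e2 q]. simpl in Hq2. exfalso; apply Hv; rewrite <- Hq2; reflexivity.
      destruct Hq2 as [Hq2 _]. inversion Hs1 as [|? ? He2 _]; subst.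
      destruct He2 as [He2|He2].
      + exfalso. destruct (HTy _ He2). destruct (oi_ends e2) as [E|E]; rewrite E in Hq2; auto.
      + destruct e2 as [c2 b2]; simpl in He2; subst c2.
        assert (b2 = negb b). { apply (@oi_orient c). rewrite Hq2. exact (eq_sym (oi_neg (c,b))). }
        subst. simpl in Hn. exfalso; tauto. }
  assert (Htree : is_tree W' T').
  { split; [exists w0; left; auto|]. split; [|split].
    - intros a [Ha|Ha]. destruct (HTW a Ha); split; left; auto.
      subst a. unfold W'. destruct b; unfold x, y, oi, ot in *; simpl in *; auto.
    - intros u v [Hu|Hu] [Hv|Hv].
      + destruct (HWc u v Hu Hv) as [q [? ?]]. eauto.
      + subst v. destruct (HWc u x Hu Hx) as [q [? ?]]. exists (q ++ [(c,b)]).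
        split. apply is_path_app. exists x; simpl; auto.
        unfold in_sub; apply Forall_app; split; auto. apply Hsub; auto. constructor; unfold T'; simpl; auto.
      + subst u. destruct (HWc x v Hx Hv) as [q [? ?]]. exists ((c, negb b) :: q).
        split. simpl. split. exact (oi_neg (c,b)). rewrite ot_neg'; auto. constructor. unfold T'; simpl; auto. apply Hsub; auto.
      + subst. exists []. simpl; split; auto. constructor.
    - intros u q Hq Hs' Hn.
      destruct (classic (u = y)) as [Hu|Hu].
      + subst u. destruct q as [|e1 q]; auto. exfalso.
        destruct Hq as [Hq1 Hq2]. inversion Hs' as [|? ? He1 Hs1]; subst.
        destruct He1 as [He1|He1].
        { destruct (HTy _ He1). destruct (oi_ends e1) as [E|E]; rewrite E in Hq1; auto. }
        destruct e1 as [c1 b1]; simpl in He1; subst c1.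
        assert (b1 = negb b). { apply (@oi_orient c). rewrite Hq1. exact (eq_sym (oi_neg (c,b))). }
        subst b1. rewrite ot_neg' in Hq2. fold x in Hq2.
        destruct (exists_last (l := q)) as [q2 [en Hen]].
        { intros ->. simpl in Hq2. auto. }
        subst q. apply is_path_app in Hq2. destruct Hq2 as [m [Hq2 [Hen1 Hen2]]]. simpl in Hen2.
        unfold in_sub in Hs1. apply Forall_app in Hs1. destruct Hs1 as [Hs2 Hsn]. inversion Hsn as [|? ? Hen _]; subst.
        destruct Hen as [Hen|Hen].
        { destruct (HTy _ Hen). destruct (ot_ends en) as [E|E]; rewrite E in Hen2; auto. }
        destruct en as [cn bn]; simpl in Hen; subst cn.
        assert (bn = b). { apply (@ot_orient c). rewrite Hen2; auto. }
        subst bn. fold x in Hq2.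
        assert (Hn2 : no_backtrack q2). { apply nbt_tail in Hn. eapply nbt_app_l; eauto. }
        assert (q2 = []). { eapply HWt; eauto. }
        subst q2. simpl in Hn. destruct b; simpl in Hn; tauto.
      + apply (HWt u); auto. eapply Havoid; eauto. }
  destruct (Hmax W' T' Htree) as [H1 _]. unfold W'; auto. unfold T'; auto.
  apply Hy. apply H1. unfold W'; auto.
Qed.

Lemma choose_spec A (a : A) (P : A -> Prop) : (exists x, P x) -> P (choose a P).
Proof. intros H. unfold choose. apply epsilon_spec; auto. Qed.

Section TP.
Variables (C : cog Y) (T : E Y -> Prop) (W : V Y -> Prop).
Hypothesis HT : is_tree W T.
Hypothesis HW : forall v, W v.

Lemma tpath_spec s0 s : is_path s0 s (tpath T s0 s) /\ no_backtrack (tpath T s0 s) /\ in_sub T (tpath T s0 s).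
Proof.
  unfold tpath. apply choose_spec.
  destruct HT as [_ [_ [Hc _]]]. destruct (Hc s0 s (HW _) (HW _)) as [p [Hp Hs]].
  destruct (reduce_path (C := C) (FGrel C) (le_n (length p)) Hp Hs) as [q [? [? [? _]]]].
  eauto.
Qed.

Lemma tpath_refl s0 : tpath T s0 s0 = [].
Proof.
  destruct (tpath_spec s0 s0) as [? [? ?]]. destruct HT as [_ [_ [_ Ht]]]. eapply Ht; eauto.
Qed.

Lemma tree_edge (rels : word (letter C) -> word (letter C) -> Prop) s0 a : T a ->
  peq rels (piw C T s0 (ter a) ++ eplus a ++ winv (piw C T s0 (ini a))) [].
Proof.
  intros Ha. unfold piw.
  destruct (tpath_spec s0 (ter a)) as [H1 [_ S1]]. destruct (tpath_spec s0 (ini a)) as [H2 [_ S2]].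
  set (q := tpath T s0 (ter a) ++ [(a,true)] ++ revp (tpath T s0 (ini a))).
  assert (Hq : is_path s0 s0 q).
  { unfold q. apply is_path_app. exists (ter a). split; auto. simpl. split; auto.
    apply revp_path; auto. }
  assert (Hs : in_sub T q).
  { unfold q, in_sub. apply Forall_app; split; auto. apply Forall_cons; auto. apply revp_sub; auto. }
  destruct (reduce_path (C := C) rels (le_n (length q)) Hq Hs) as [q' [Hq' [Hs' [Hn' Hw]]]].
  destruct HT as [_ [_ [_ Ht]]]. rewrite (Ht _ _ Hq' Hs' Hn') in Hw. simpl in Hw.
  unfold q in Hw. pose proof (revp_word C (tpath T s0 (ini a))) as E. unfold oedge in *. rewrite !flat_map_app in Hw. rewrite E in Hw. simpl in Hw. exact Hw.
Qed.
End TP.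

End Tree.

Section DC.
Variables (Y : scwol) (C : cog Y) (T : E Y -> Prop).
Hypothesis HC : is_cog C.
Notation Pe := (peq (pi1rel C T)).

Lemma FtoP u v : peq (FGrel C) u v -> Pe u v.
Proof. apply peq_mono. intros; left; auto. Qed.

Lemma Pgen_mul (x y : Gel C) : loc x = loc y -> Pe (gen x ++ gen y) (gen (gmul x y)).
Proof. intros; apply FtoP, gen_mul; auto. Qed.
Lemma Pgen_one s : Pe (gen (gone C s)) [].
Proof. apply FtoP, gen_one; auto. Qed.
Lemma Pgen_inv (x : Gel C) : Pe (gen (ginv x)) (winv (gen x)).
Proof. apply FtoP, gen_inv; auto. Qed.

Section Cos.
Variables (Z : Type) (f : Z -> V Y).
Definition cosrel (x y : word (letter C) * Z) : Prop :=
  snd x = snd y /\ exists g : Gel C, loc g = f (snd x) /\ Pe (fst y) (fst x ++ gen g).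

Lemma cos_refl x : cosrel x x.
Proof.
  split; auto. exists (gone C (f (snd x))). rewrite c_loc_one; auto. split; auto.
  generalize (pe_app (pe_refl (fst x)) (pe_sym (Pgen_one (f (snd x))))). rewrite app_nil_r; auto.
Qed.

Lemma cos_sym x y : cosrel x y -> cosrel y x.
Proof.
  intros [H1 [g [Hg Hp]]]. split; auto. exists (ginv g). rewrite c_loc_inv; auto. split. congruence.
  apply pe_sym. eapply pe_trans. apply pe_app. apply Hp. apply Pgen_inv. rewrite <- app_assoc. generalize (pe_app (pe_refl (fst x)) (pe_inv_r (rels := pi1rel C T) (gen g))).
  rewrite app_nil_r; auto.
Qed.

Lemma cos_trans x y z : cosrel x y -> cosrel y z -> cosrel x z.
Proof.
  intros [H1 [g [Hg Hp]]] [H2 [h [Hh Hq]]]. split. congruence. exists (gmul g h).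
  rewrite c_loc_mul; auto; [|congruence]. split; auto.
  eapply pe_trans. apply Hq. eapply pe_trans. apply pe_app. apply Hp. apply pe_refl.
  rewrite <- app_assoc. apply pe_app. apply pe_refl. apply Pgen_mul. congruence.
Qed.

Lemma cos_eq w w' s g : loc g = f s -> Pe w' (w ++ gen g) -> cls cosrel (w,s) = cls cosrel (w',s).
Proof.
  intros H1 H2. apply cls_eq; try exact cos_refl; try exact cos_sym; try exact cos_trans.
  split; auto. exists g; auto.
Qed.

Lemma cos_eq' w w' s : Pe w w' -> cls cosrel (w,s) = cls cosrel (w',s).
Proof.
  intros H. destruct (cos_refl (w,s)) as [_ [g [Hg Hp]]]. apply cos_eq with g; auto.
  simpl in *. eapply pe_trans. apply pe_sym; apply H. auto.
Qed.

Lemma cos_inj w w' s s' : cls cosrel (w,s) = cls cosrel (w',s') ->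
  s = s' /\ exists g, loc g = f s /\ Pe w' (w ++ gen g).
Proof. intros H. apply cls_inj in H; try exact cos_refl. exact H. Qed.

Lemma cos_rep w s : snd (rep (cls cosrel (w,s))) = s /\
  exists g, loc g = f s /\ Pe (fst (rep (cls cosrel (w,s)))) (w ++ gen g).
Proof.
  assert (H := rep_cls cos_refl (w,s)). destruct H as [H1 H2]. simpl in *. auto.
Qed.

Lemma cos_rep_pair (q : quot cosrel) : cls cosrel (fst (rep q), snd (rep q)) = q.
Proof. rewrite <- surjective_pairing. apply cls_rep; try exact cos_refl; try exact cos_sym; try exact cos_trans. Qed.

Lemma cos_act u w s : cls cosrel (rep (cls Pe u) ++ fst (rep (cls cosrel (w,s))), snd (rep (cls cosrel (w,s))))
  = cls cosrel (u ++ w, s).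
Proof.
  destruct (cos_rep w s) as [-> [g [Hg Hp]]]. symmetry. apply cos_eq with g; auto.
  rewrite <- app_assoc. apply pe_app. apply pe_sym, prep_cls. auto.
Qed.
End Cos.

Lemma Dv_def : Dvrel C T = cosrel (fun s => s).
Proof. reflexivity. Qed.
Lemma De_def : Derel C T = cosrel (@ini Y).
Proof. reflexivity. Qed.

Lemma DactV_cls u w s : DactV (cls Pe u) (cls (Dvrel C T) (w,s)) = cls (Dvrel C T) (u ++ w, s).
Proof. unfold DactV. apply (cos_act (fun s => s)). Qed.

Lemma DactE_cls u w a : DactE (cls Pe u) (cls (Derel C T) (w,a)) = cls (Derel C T) (u ++ w, a).
Proof. unfold DactE. apply (cos_act (@ini Y)). Qed.

Lemma Dini_cls w a : Dini (cls (Derel C T) (w,a)) = cls (Dvrel C T) (w, ini a).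
Proof.
  unfold Dini. destruct (cos_rep (@ini Y) w a) as [Hs [g [Hg Hp]]].
  rewrite De_def, Hs. symmetry. apply (cos_eq (f:=fun s => s) (g:=g)); auto.
Qed.

Lemma Dter_cls w a : Dter (cls (Derel C T) (w,a)) = cls (Dvrel C T) (w ++ eminus a, ter a).
Proof.
  unfold Dter. destruct (cos_rep (@ini Y) w a) as [Hs [g [Hg Hp]]].
  rewrite De_def, Hs. symmetry. apply (cos_eq (f:=fun s => s) (g:=psi a g)).
  apply c_loc_psi; auto.
  eapply pe_trans. apply pe_app. apply Hp. apply pe_refl. rewrite <- !app_assoc.
  apply pe_app. apply pe_refl. apply FtoP, conj_minus; auto.
Qed.

Lemma Dcmp_cls w w' a b : ini (cmp a b) = ini b ->
  Dcmp (cls (Derel C T) (w,a)) (cls (Derel C T) (w',b)) = cls (Derel C T) (w', cmp a b).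
Proof.
  intros Hi. unfold Dcmp. destruct (cos_rep (@ini Y) w a) as [Hs [g [Hg Hp]]].
  destruct (cos_rep (@ini Y) w' b) as [Hs' [g' [Hg' Hp']]].
  rewrite De_def, Hs, Hs'. symmetry. apply (cos_eq (f:=@ini Y) (g:=g')); auto. simpl. congruence.
Qed.

End DC.

Lemma wmap_id A (w : word A) : wmap (fun x => [(x,false)]) w = w.
Proof.
  induction w as [|[x b] w IH]; auto. change ((x,b)::w) with ([(x,b)] ++ w).
  rewrite wmap_app, IH. destruct b; reflexivity.
Qed.

Section K.
Variables (Y : scwol) (C : cog Y) (T : E Y -> Prop) (W : V Y -> Prop) (s0 : V Y).
Hypothesis HY : is_scwol Y.
Hypothesis HC : is_cog C.
Hypothesis HT : is_tree W T.
Hypothesis HW : forall v, W v.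
Notation Pe := (peq (pi1rel C T)).
Notation Fe := (peq (FGrel C)).
Notation kl := (kappa_letter T s0).
Notation pi := (piw C T s0).

Lemma kl_cm (x : letter C) : kl x = cm pi (fun x => [(x,false)]) x.
Proof. destruct x; reflexivity. Qed.

Lemma wmap_ext_eq A B (f g : A -> word B) : (forall x, f x = g x) -> forall w, wmap f w = wmap g w.
Proof. intros H w. unfold wmap. apply flat_map_ext. intros [x b]; rewrite H; auto. Qed.

Lemma kappa_tele u v w : tpw u v w -> Fe (wmap kl w) (pi u ++ w ++ winv (pi v)).
Proof.
  intros H. rewrite (wmap_ext_eq kl_cm). generalize (cm_tele (FGrel C) pi (fun x => [(x,false)]) H).
  rewrite wmap_id; auto.
Qed.

Lemma pi_s0 : pi s0 = [].
Proof. unfold piw. rewrite (tpath_refl C HT HW). reflexivity. Qed.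

Lemma kappa_loop (w : word (letter C)) : tpw s0 s0 w -> Fe (wmap kl w) w.
Proof. intros H. generalize (kappa_tele H). rewrite pi_s0. simpl. rewrite app_nil_r; auto. Qed.

Lemma pi_typed s : tpw s0 s (pi s).
Proof. apply (tpw_path C). destruct (tpath_spec C HT HW s0 s) as [? _]; auto. Qed.

Lemma kl_typed (x : letter C) : tpw s0 s0 (kl x).
Proof.
  destruct x as [g|a]; cbn [kappa_letter].
  - apply tpw_app with (m := loc g). apply pi_typed. apply tpw_app with (m := loc g). simpl; auto. apply tpw_winv, pi_typed.
  - apply tpw_app with (m := ter a). apply pi_typed. apply tpw_app with (m := ini a). simpl; auto. apply tpw_winv, pi_typed.
Qed.

Lemma kappa_typed (w : word (letter C)) : tpw s0 s0 (wmap kl w).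
Proof.
  induction w as [|[x b] w IH]. simpl; auto. change ((x,b)::w) with ([(x,b)] ++ w).
  rewrite wmap_app. eapply tpw_app; eauto. simpl. rewrite app_nil_r. destruct b. apply tpw_winv. all: apply kl_typed.
Qed.

Lemma kappa_PF u v : Pe u v -> Fe (wmap kl u) (wmap kl v).
Proof.
  apply wmap_peq. intros l r [H|[a [Ha [-> ->]]]].
  - rewrite !(wmap_ext_eq kl_cm). apply (cm_rel HY HC); auto. rewrite !wmap_id. apply pe_rel; auto.
  - simpl. rewrite app_nil_r. apply (tree_edge HT HW); auto.
Qed.

Lemma sub_P p : in_sub T p -> Pe (flat_map (oword C) p) [].
Proof.
  induction 1 as [|e p He Hp IH]; simpl. apply pe_refl.
  change [] with ([] ++ [] : word (letter C)). apply pe_app; auto.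
  destruct e as [a []]; unfold oword, eplus, eminus; simpl in *.
  - apply pe_rel. right. exists a; auto.
  - change [(inr a, true)] with (winv (@eplus _ C a)). change (@nil (letter C * bool)) with (winv (@nil (letter C * bool))).
    apply pe_winv. apply pe_rel. right. exists a; auto.
Qed.

Lemma pi_P s : Pe (pi s) [].
Proof. apply sub_P. destruct (tpath_spec C HT HW s0 s) as [_ [_ ?]]; auto. Qed.

Lemma conj_triv (A B m : word (letter C)) : Pe A [] -> Pe B [] -> Pe (A ++ m ++ winv B) m.
Proof. intros H H'. generalize (pe_app H (pe_app (pe_refl m) (pe_winv H'))). simpl. rewrite app_nil_r. auto. Qed.

Lemma kappa_P (w : word (letter C)) : Pe (wmap kl w) w.
Proof.
  rewrite <- (wmap_id w) at 2. apply wmap_ext_peq. intros [g|a]; cbn [kappa_letter]; apply conj_triv; apply pi_P.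
Qed.

Lemma FtoP' u v : Fe u v -> Pe u v. Proof. apply (FtoP T). Qed.

Lemma kappa_PP u v : Pe (wmap kl u) (wmap kl v) -> Pe u v.
Proof.
  intros H. eapply pe_trans. apply pe_sym, kappa_P. eapply pe_trans. apply H. apply kappa_P.
Qed.
End K.

Section GL.
Variable G : grp.
Hypothesis HG : is_grp G.
Notation "a * b" := (gop G a b).
Notation inv := (ginvg G).
Lemma g_cancel_l (a b c : G) : a * b = a * c -> b = c.
Proof.
  intros H. apply (f_equal (gop G (inv a))) in H. rewrite <- !(g_assoc HG), (g_invl HG), !(g_idl HG) in H. auto.
Qed.
Lemma g_cancel_r (a b c : G) : b * a = c * a -> b = c.
Proof.
  intros H. apply (f_equal (fun z => gop G z (inv a))) in H. rewrite !(g_assoc HG), (g_invr HG), !(g_idr HG) in H. auto.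
Qed.
Lemma g_Ll (a z : G) : inv a * (a * z) = z.
Proof. rewrite <- (g_assoc HG), (g_invl HG), (g_idl HG). auto. Qed.
Lemma g_inv_mul (a b : G) : inv (a * b) = inv b * inv a.
Proof.
  apply (@g_cancel_l (a * b)). rewrite (g_invr HG). rewrite (g_assoc HG). rewrite <- ((g_assoc HG) b).
  rewrite (g_invr HG), (g_idl HG), (g_invr HG). auto.
Qed.
End GL.

Section Inj.
Variables (Y : scwol) (C : cog Y) (T : E Y -> Prop) (W : V Y -> Prop) (s0 : V Y).
Hypothesis HY : is_scwol Y.
Hypothesis HC : is_cog C.
Hypothesis HT : is_tree W T.
Hypothesis HW : forall v, W v.
Hypothesis Hdev : developable C.
Notation Pe := (peq (pi1rel C T)).

Lemma gen_inj (x y : Gel C) : loc x = loc y -> Pe (gen x) (gen y) -> x = y.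
Proof.
  intros Hl Hp.
  destruct Hdev as [G [X [aV [aE [p [lift [elift [h [f [fE [HG [_ [_ [_ [_ [_ [_ [_ [_ [_ [Hfm [Hfi [_ [_ [Hpsi Htw]]]]]]]]]]]]]]]]]]]]]]]]].
  set (Psi := fun l : letter C => match l with inl g => f g | inr a => gop G (fE a) (h a) end).
  assert (Hev : forall u v, peq (FGrel C) u v -> ev Psi u = ev Psi v).
  { apply (ev_peq HG); auto. intros l r [[x' [y' [Hxy [-> ->]]]]|[[a [b [Hab [-> ->]]]]|[a [x' [Hx [-> ->]]]]]];
      simpl; rewrite ?(g_idr HG).
    - rewrite Hfm; auto.
    - transitivity (gop G (gop G (f (twist a b)) (fE (cmp a b))) (h (cmp a b))).
      + rewrite Htw; auto. rewrite !(g_assoc HG). rewrite (g_Ll HG). rewrite (g_invl HG), (g_idr HG). auto.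
      + rewrite (g_assoc HG); auto.
    - rewrite <- Hpsi; auto. rewrite (g_inv_mul HG). rewrite !(g_assoc HG). auto. }
  apply Hfi; auto.
  assert (H2 := kappa_PF s0 HY HC HT HW Hp). apply Hev in H2.
  unfold wmap in H2; simpl in H2. rewrite !app_nil_r in H2. rewrite Hl in H2.
  rewrite !(ev_app HG) in H2. simpl in H2.
  apply (g_cancel_l HG) in H2. apply (g_cancel_r HG) in H2. auto.
Qed.
End Inj.

Lemma pe_solve_r A (r : word A -> word A -> Prop) (P X B : word A) : peq r (P ++ X) B -> peq r X (winv P ++ B).
Proof.
  intros H. apply pe_cancel_l with P. eapply pe_trans. apply H. rewrite app_assoc.
  generalize (pe_app (pe_sym (pe_inv_r (rels := r) P)) (pe_refl B)). simpl; auto.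
Qed.

Lemma pe_solve_l A (r : word A -> word A -> Prop) (P X B : word A) : peq r (X ++ P) B -> peq r X (B ++ winv P).
Proof.
  intros H. apply pe_cancel_r with P. eapply pe_trans. apply H. rewrite <- app_assoc.
  generalize (pe_app (pe_refl B) (pe_sym (pe_inv_l (rels := r) P))). rewrite app_nil_r; auto.
Qed.

Section Main.
Variables (Y Y' : scwol) (C : cog Y) (C' : cog Y') (T : E Y -> Prop) (T' : E Y' -> Prop)
  (L : scwol_mor (D C T) (D C' T')) (Lambda : pi1 C T -> pi1 C' T') (s0 : V Y)
  (W : V Y -> Prop) (W' : V Y' -> Prop).
Hypotheses (HY : is_scwol Y) (HY' : is_scwol Y') (HC : is_cog C) (HC' : is_cog C')
  (Hdev' : developable C') (HT : is_tree W T) (HW : forall v, W v)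
  (HT' : is_tree W' T') (HW' : forall v, W' v) (HL : is_scwol_mor L)
  (Hhom : forall g h, Lambda (pmul g h) = pmul (Lambda g) (Lambda h))
  (HeqV : forall g v, mV L (DactV g v) = DactV (Lambda g) (mV L v))
  (HeqE : forall g e, mE L (DactE g e) = DactE (Lambda g) (mE L e)).

Notation P := (peq (pi1rel C T)).
Notation P' := (peq (pi1rel C' T')).
Notation F := (peq (FGrel C)).
Notation F' := (peq (FGrel C')).
Notation DV := (cls (Dvrel C T)).
Notation DE := (cls (Derel C T)).
Notation DV' := (cls (Dvrel C' T')).
Notation DE' := (cls (Derel C' T')).

Definition lV (s : V Y) : V Y' := snd (rep (mV L (DV ([], s)))).
Definition lE (a : E Y) : E Y' := snd (rep (mE L (DE ([], a)))).
Definition kk0 (s : V Y) : word (letter C') := fst (rep (mV L (DV ([], s)))).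
Definition kk (s : V Y) : word (letter C') :=
  if excluded_middle_informative (s = s0) then [] else kk0 s.
Definition Rw (w : word (letter C)) : word (letter C') := rep (Lambda (cls P w)).

Hypothesis Hbase : mV L (DV ([], s0)) = DV' ([], lV s0).

Lemma DV_rep (v : V (D C T)) : v = DV (fst (rep v), snd (rep v)).
Proof. symmetry. apply (cos_rep_pair (f := fun s => s)). Qed.
Lemma DV'_rep (v : V (D C' T')) : v = DV' (fst (rep v), snd (rep v)).
Proof. symmetry. apply (cos_rep_pair (f := fun s => s)). Qed.
Lemma DE_rep (e : E (D C T)) : e = DE (fst (rep e), snd (rep e)).
Proof. symmetry. apply (cos_rep_pair (f := @ini Y)). Qed.
Lemma DE'_rep (e : E (D C' T')) : e = DE' (fst (rep e), snd (rep e)).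
Proof. symmetry. apply (cos_rep_pair (f := @ini Y')). Qed.

Lemma kk_spec s : mV L (DV ([], s)) = DV' (kk s, lV s).
Proof.
  unfold kk. destruct (excluded_middle_informative (s = s0)) as [->|_]. apply Hbase.
  apply DV'_rep.
Qed.

Lemma kk_s0 : kk s0 = [].
Proof. unfold kk. destruct (excluded_middle_informative (s0 = s0)); congruence. Qed.

Lemma Rw_cls w : cls P' (Rw w) = Lambda (cls P w).
Proof. apply pcls_rep. Qed.
Lemma Rw_eq u v : P u v -> Rw u = Rw v.
Proof. intros H. unfold Rw. rewrite (pcls_eq H). auto. Qed.
Lemma Rw_app u v : P' (Rw (u ++ v)) (Rw u ++ Rw v).
Proof.
  unfold Rw. rewrite <- pmul_cls, Hhom. apply rep_pmul.
Qed.
Lemma Rw_nil : P' (Rw []) [].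
Proof.
  apply pe_cancel_l with (Rw []). rewrite app_nil_r. apply pe_sym. exact (Rw_app [] []).
Qed.
Lemma Rw_winv u : P' (Rw (winv u)) (winv (Rw u)).
Proof.
  apply pe_cancel_l with (Rw u). eapply pe_trans. apply pe_sym, Rw_app.
  rewrite (Rw_eq (pe_inv_r (rels := pi1rel C T) u)). eapply pe_trans. apply Rw_nil. apply pe_sym, pe_inv_r.
Qed.

Lemma LV_gen w s : mV L (DV (w, s)) = DV' (Rw w ++ kk s, lV s).
Proof.
  transitivity (mV L (DactV (cls P w) (DV ([], s)))).
  { f_equal. rewrite (DactV_cls T HC), app_nil_r; reflexivity. }
  rewrite HeqV, kk_spec. rewrite <- Rw_cls. apply DactV_cls; auto.
Qed.

Lemma l_ini a : ini (lE a) = lV (ini a).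
Proof.
  destruct HL as [Hi _].
  assert (H := Hi (DE ([], a))). rewrite (DE'_rep (mE L (DE ([], a)))) in H.
  change (snd (rep (mE L (DE ([], a))))) with (lE a) in H.
  change (@ini (D C' T')) with (@Dini Y' C' T') in H. change (@ini (D C T)) with (@Dini Y C T) in H.
  rewrite (Dini_cls T' HC'), (Dini_cls T HC), kk_spec in H.
  apply (cos_inj HC' (f := fun s => s)) in H. destruct H; auto.
Qed.

Lemma LE_base a : mE L (DE ([], a)) = DE' (kk (ini a), lE a).
Proof.
  destruct HL as [Hi _].
  assert (H := Hi (DE ([], a))). rewrite (DE'_rep (mE L (DE ([], a)))) in *.
  change (snd (rep (mE L (DE ([], a))))) with (lE a) in *.
  change (@ini (D C' T')) with (@Dini Y' C' T') in H. change (@ini (D C T)) with (@Dini Y C T) in H.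
  rewrite (Dini_cls T' HC'), (Dini_cls T HC), kk_spec in H.
  apply (cos_inj HC' (f := fun s => s)) in H. destruct H as [H1 [g [Hg Hp]]].
  apply (cos_eq HC' (f := @ini Y') (g := g)); auto.
Qed.

Lemma LE_gen w a : mE L (DE (w, a)) = DE' (Rw w ++ kk (ini a), lE a).
Proof.
  transitivity (mE L (DactE (cls P w) (DE ([], a)))).
  { f_equal. rewrite (DactE_cls T HC), app_nil_r; reflexivity. }
  rewrite HeqE, LE_base. rewrite <- Rw_cls. apply DactE_cls; auto.
Qed.


Definition Phi := cm (fun s => winv (kk s)) (fun x : letter C => Rw [(x,false)]).

Lemma Phi_inl x : Phi (inl x) = winv (kk (loc x)) ++ Rw (gen x) ++ kk (loc x).
Proof. unfold Phi, cm. rewrite winv_winv. reflexivity. Qed.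
Lemma Phi_inr a : Phi (inr a) = winv (kk (ter a)) ++ Rw (eplus a) ++ kk (ini a).
Proof. unfold Phi, cm. rewrite winv_winv. reflexivity. Qed.

Lemma Rw_gen_triv x : DV (gen x, loc x) = DV ([], loc x).
Proof. symmetry. apply (cos_eq HC (f := fun s => s) (g := x)); auto. apply pe_refl. Qed.

Lemma phi_ex (x : Gel C) : exists z, loc z = lV (loc x) /\ P' (gen z) (Phi (inl x)).
Proof.
  assert (H := f_equal (mV L) (Rw_gen_triv x)). rewrite !LV_gen in H.
  apply (cos_inj HC' (f := fun s => s)) in H. destruct H as [_ [g [Hg Hp]]]. simpl in Hg.
  exists (ginv g). rewrite (c_loc_inv HC'). split; auto.
  rewrite Phi_inl.
  eapply pe_trans. apply (Pgen_inv T' HC').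
  assert (H1 : P' (kk (loc x)) ((Rw (gen x) ++ kk (loc x)) ++ gen g)).
  { eapply pe_trans; [|apply Hp]. generalize (pe_app (pe_sym Rw_nil) (pe_refl (kk (loc x)))). simpl; auto. }
  apply pe_sym in H1. apply pe_solve_r in H1. apply pe_winv in H1. rewrite !winv_app, !winv_winv in H1.
  eapply pe_trans. apply H1. ls. apply pe_refl.
Qed.

Lemma l_ter_ex a : ter (lE a) = lV (ter a) /\
  exists z, loc z = ter (lE a) /\ P' (gen z ++ eplus (lE a)) (Phi (inr a)).
Proof.
  destruct HL as [_ [Ht _]].
  assert (H := Ht (DE ([], a))). rewrite LE_base in H.
  change (@ter (D C' T')) with (@Dter Y' C' T') in H. change (@ter (D C T)) with (@Dter Y C T) in H.
  rewrite (Dter_cls T' HC'), (Dter_cls T HC), LV_gen in H.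
  apply (cos_inj HC' (f := fun s => s)) in H. destruct H as [H0 [g [Hg Hp]]]. simpl in Hg, H0.
  split; auto. exists (ginv g). rewrite (c_loc_inv HC'). split; auto.
  rewrite Phi_inr.
  apply pe_sym in Hp. rewrite <- app_assoc in Hp. apply pe_solve_r in Hp. apply pe_winv in Hp.
  rewrite !winv_app, !winv_winv, app_nil_l in Hp. rewrite <- !app_assoc in Hp.
  eapply pe_trans. apply pe_app. apply (Pgen_inv T' HC'). apply pe_refl.
  eapply pe_trans. exact Hp.
  apply pe_app. apply pe_refl. apply pe_app; [|apply pe_refl].
  generalize (pe_winv (Rw_winv (eplus a))). rewrite winv_winv. auto.
Qed.

Lemma l_ter a : ter (lE a) = lV (ter a). Proof. apply l_ter_ex. Qed.

Definition phi0 (x : Gel C) : Gel C' :=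
  choose (gone C' (lV (loc x))) (fun z => loc z = lV (loc x) /\ P' (gen z) (Phi (inl x))).
Definition phiE0 (a : E Y) : Gel C' :=
  choose (gone C' (ter (lE a))) (fun z => loc z = ter (lE a) /\ P' (gen z ++ eplus (lE a)) (Phi (inr a))).

Lemma phi0_spec x : loc (phi0 x) = lV (loc x) /\ P' (gen (phi0 x)) (Phi (inl x)).
Proof. unfold phi0. apply choose_spec, phi_ex. Qed.
Lemma phiE0_spec a : loc (phiE0 a) = ter (lE a) /\ P' (gen (phiE0 a) ++ eplus (lE a)) (Phi (inr a)).
Proof. unfold phiE0. apply choose_spec. apply l_ter_ex. Qed.

Definition lm : scwol_mor Y Y' := @Smor Y Y' lV lE.
Definition lam : cog_mor C C' := @Cmor Y Y' C C' phi0 phiE0.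


Notation Fl := (Flet lm lam).
Lemma Fl_inl g : Fl (inl g) = gen (phi0 g). Proof. reflexivity. Qed.
Lemma Fl_inr a : Fl (inr a) = gen (phiE0 a) ++ eplus (lE a). Proof. reflexivity. Qed.

Lemma wM_Rw w : P' (wmap (fun x : letter C => Rw [(x,false)]) w) (Rw w).
Proof.
  induction w as [|[x b] w IH]. simpl. apply pe_sym, Rw_nil.
  change ((x,b)::w) with ([(x,b)] ++ w). rewrite wmap_app.
  eapply pe_trans; [|apply pe_sym, Rw_app]. apply pe_app; auto.
  simpl. rewrite app_nil_r. destruct b. 
  - change [(x,true)] with (winv [(x,false)]). apply pe_sym, Rw_winv.
  - apply pe_refl.
Qed.

Lemma Phi_tele u v w : tpw u v w -> P' (wmap Phi w) (winv (kk u) ++ Rw w ++ kk v).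
Proof.
  intros H. unfold Phi. eapply pe_trans. apply cm_tele; eauto.
  cbv beta. rewrite winv_winv. apply pe_app. apply pe_refl. apply pe_app. apply wM_Rw. apply pe_refl.
Qed.

Lemma Phi_rel u v : F u v -> P' (wmap Phi u) (wmap Phi v).
Proof.
  apply wmap_peq. intros l r H. unfold Phi. apply (cm_rel HY HC); auto.
  eapply pe_trans. apply wM_Rw. eapply pe_trans; [|apply pe_sym, wM_Rw].
  rewrite (Rw_eq (FtoP T (pe_rel H))). apply pe_refl.
Qed.

Lemma Fl_Phi w : P' (wmap Fl w) (wmap Phi w).
Proof.
  apply wmap_ext_peq. intros [g|a].
  - rewrite Fl_inl. apply (phi0_spec g).
  - rewrite Fl_inr. apply (phiE0_spec a).
Qed.

Lemma Fl_FP u v : F u v -> P' (wmap Fl u) (wmap Fl v).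
Proof.
  intros H. eapply pe_trans. apply Fl_Phi. eapply pe_trans. apply Phi_rel; eauto. apply pe_sym, Fl_Phi.
Qed.

Lemma Fl_typed u v w : tpw u v w -> tpw (C := C') (lV u) (lV v) (wmap Fl w).
Proof.
  revert u; induction w as [|[x b] w IH]; intros u H.
  - simpl in *; subst; reflexivity.
  - change ((x,b)::w) with ([(x,b)] ++ w) in *. rewrite wmap_app.
    apply tpw_app_inv in H. destruct H as [m [H1 H2]].
    apply tpw_app with (lV m); auto. simpl. rewrite app_nil_r.
    assert (Hx : forall u m, tpw u m [(x,false)] -> tpw (C := C') (lV u) (lV m) (Fl x)).
    { clear H1 H2 IH. intros u0 m0 H. destruct x as [g|a]; simpl in H.
      - destruct H as [H1 H2]; subst. rewrite Fl_inl. simpl. split; auto. apply (proj1 (phi0_spec g)).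
      - destruct H as [H1 H2]; subst. rewrite Fl_inr. apply tpw_app with (ter (lE a)).
        simpl. rewrite <- l_ter. split; [apply phiE0_spec|auto]. simpl. split; auto. apply l_ini. }
    destruct b.
    + apply tpw_winv. apply Hx. apply tpw_winv in H1. exact H1.
    + apply Hx; auto.
Qed.


Lemma ginj (x y : Gel C') : loc x = loc y -> P' (gen x) (gen y) -> x = y.
Proof. apply (gen_inj (lV s0) HY' HC' HT' HW' Hdev'). Qed.

Lemma loc_phi0 x : loc (phi0 x) = lV (loc x). Proof. apply (proj1 (phi0_spec x)). Qed.
Lemma loc_phiE0 a : loc (phiE0 a) = ter (lE a). Proof. apply (proj1 (phiE0_spec a)). Qed.

Lemma W2 (x y : Gel C) : loc x = loc y -> F' (wmap Fl (gen x ++ gen y)) (gen (gmul (phi0 x) (phi0 y))).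
Proof.
  intros H. change (wmap Fl (gen x ++ gen y)) with (gen (phi0 x) ++ gen (phi0 y) ++ []).
  rewrite app_nil_r. apply gen_mul. rewrite !loc_phi0, H; auto.
Qed.

Lemma W4 a (x : Gel C) : loc x = ini a ->
  F' (wmap Fl (eplus a ++ gen x ++ eminus a))
     (gen (gmul (gmul (phiE0 a) (psi (lE a) (phi0 x))) (ginv (phiE0 a)))).
Proof.
  intros Hx.
  assert (HB : loc (phi0 x) = ini (lE a)). { rewrite loc_phi0, Hx, l_ini; auto. }
  assert (HB' : loc (psi (lE a) (phi0 x)) = loc (phiE0 a)). { rewrite (c_loc_psi HC'), loc_phiE0; auto. }
  change (wmap Fl (eplus a ++ gen x ++ eminus a)) with
    ((gen (phiE0 a) ++ eplus (lE a)) ++ gen (phi0 x) ++ winv (gen (phiE0 a) ++ eplus (lE a)) ++ []).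
  rewrite app_nil_r, winv_app. ls.
  apply pe_sym. eapply pe_trans. apply pe_sym, gen_mul. rewrite (c_loc_mul HC'), (c_loc_inv HC'); auto.
  eapply pe_trans. apply pe_app. apply pe_sym, gen_mul; auto. apply (gen_inv HC'). ls.
  apply (pe_ctx [(inl (phiE0 a), false)] (winv (gen (phiE0 a))) (u := [(inl (psi (lE a) (phi0 x)), false)])
    (v := [(inr (lE a), false); (inl (phi0 x), false); (inr (lE a), true)])).
  apply pe_sym. eapply pe_trans. apply (pe_app (conj_plus (C := C') HB) (pe_refl [(inr (lE a), true)])).
  generalize (pe_ctx (gen (psi (lE a) (phi0 x))) [] (pe_inv_r (rels := FGrel C') (eplus (lE a)))).
  simpl. auto.
Qed.


Lemma lcomp a b : composable a b -> composable (lE a) (lE b).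
Proof. unfold composable. intros H. rewrite l_ini, l_ter, H; auto. Qed.

Lemma W5 a b : composable a b ->
  F' (wmap Fl (eplus a ++ eplus b))
     (gen (gmul (gmul (phiE0 a) (psi (lE a) (phiE0 b))) (twist (lE a) (lE b))) ++ eplus (cmp (lE a) (lE b))).
Proof.
  intros Hab. assert (Hc := lcomp Hab).
  assert (HB : loc (phiE0 b) = ini (lE a)). { rewrite loc_phiE0. symmetry; apply Hc. }
  assert (HB' : loc (psi (lE a) (phiE0 b)) = loc (phiE0 a)). { rewrite (c_loc_psi HC'), loc_phiE0; auto. }
  assert (Hg : loc (twist (c := C') (lE a) (lE b)) = loc (phiE0 a)). { rewrite (c_loc_twist HC'), loc_phiE0; auto. }
  change (wmap Fl (eplus a ++ eplus b)) with
    ((gen (phiE0 a) ++ eplus (lE a)) ++ (gen (phiE0 b) ++ eplus (lE b)) ++ []).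
  rewrite app_nil_r.
  apply pe_sym. eapply pe_trans. apply pe_app. apply pe_sym, gen_mul. rewrite (c_loc_mul HC'); auto. apply pe_refl.
  eapply pe_trans. apply pe_app. apply pe_app. apply pe_sym, gen_mul; auto. apply pe_refl. apply pe_refl.
  apply pe_sym. rewrite <- !app_assoc. apply pe_app. apply pe_refl.
  eapply pe_trans. rewrite app_assoc. apply pe_app. apply (conj_plus (C := C') HB). apply pe_refl.
  rewrite <- !app_assoc. apply pe_app. apply pe_refl. apply (twist_rel C' Hc).
Qed.


Lemma l_cmp a b : composable a b -> lE (cmp a b) = cmp (lE a) (lE b).
Proof.
  intros Hab. destruct HL as [_ [_ Hc]].
  assert (Hcomp : composable (X := D C T) (DE ([], a)) (DE (eplus b, b))).
  { unfold composable. change (@ini (D C T)) with (@Dini Y C T). change (@ter (D C T)) with (@Dter Y C T).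
    rewrite (Dini_cls T HC), (Dter_cls T HC). rewrite Hab.
    apply (cos_eq' HC (fun s => s)). apply pe_sym; exact (pe_inv_r (eplus b)). }
  assert (H := Hc _ _ Hcomp).
  destruct HY as [Hs _]. destruct (Hs a b Hab) as [Hi _].
  destruct HY' as [Hs' _]. destruct (Hs' _ _ (lcomp Hab)) as [Hi' _].
  change (@cmp (D C T)) with (@Dcmp Y C T) in H. change (@cmp (D C' T')) with (@Dcmp Y' C' T') in H.
  rewrite (Dcmp_cls T HC _ _ Hi) in H. rewrite LE_gen, LE_base, LE_gen in H.
  rewrite (Dcmp_cls T' HC' _ _ Hi') in H.
  apply (cos_inj HC' (f := @ini Y')) in H. destruct H; auto.
Qed.

Lemma ax2 (x y : Gel C) : loc x = loc y -> phi0 (gmul x y) = gmul (phi0 x) (phi0 y).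
Proof.
  intros H. apply ginj.
  - rewrite loc_phi0, (c_loc_mul HC'), loc_phi0, (c_loc_mul HC); auto. rewrite !loc_phi0, H; auto.
  - change (gen (phi0 (gmul x y))) with (wmap Fl (gen (gmul x y))).
    eapply pe_trans. apply Fl_FP. apply pe_sym, gen_mul; auto. apply (FtoP T'). apply W2; auto.
Qed.

Lemma ax4 a (x : Gel C) : loc x = ini a ->
  gmul (gmul (phiE0 a) (psi (lE a) (phi0 x))) (ginv (phiE0 a)) = phi0 (psi a x).
Proof.
  intros Hx.
  assert (HB : loc (phi0 x) = ini (lE a)). { rewrite loc_phi0, Hx, l_ini; auto. }
  assert (HB' : loc (psi (lE a) (phi0 x)) = loc (phiE0 a)). { rewrite (c_loc_psi HC'), loc_phiE0; auto. }
  apply ginj.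
  - rewrite loc_phi0, (c_loc_psi HC) by auto. rewrite <- l_ter.
    assert (E1 : loc (gmul (phiE0 a) (psi (lE a) (phi0 x))) = loc (phiE0 a)) by (apply (c_loc_mul HC'); congruence).
    rewrite (c_loc_mul HC'); rewrite ?E1; [apply loc_phiE0 | rewrite (c_loc_inv HC'); auto].
  - eapply pe_trans. apply (FtoP T'). apply pe_sym, W4; auto.
    change (gen (phi0 (psi a x))) with (wmap Fl (gen (psi a x))).
    apply Fl_FP. apply pe_sym, pe_rel. right; right. exists a, x. auto.
Qed.

Lemma ax5 a b : composable a b ->
  gmul (phi0 (twist a b)) (phiE0 (cmp a b)) =
  gmul (gmul (phiE0 a) (psi (lE a) (phiE0 b))) (twist (lE a) (lE b)).
Proof.
  intros Hab. assert (Hc := lcomp Hab).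
  assert (HB : loc (phiE0 b) = ini (lE a)). { rewrite loc_phiE0. symmetry; apply Hc. }
  assert (HB' : loc (psi (lE a) (phiE0 b)) = loc (phiE0 a)). { rewrite (c_loc_psi HC'), loc_phiE0; auto. }
  assert (Hg : loc (twist (c := C') (lE a) (lE b)) = loc (phiE0 a)). { rewrite (c_loc_twist HC'), loc_phiE0; auto. }
  destruct HY as [Hs _]. destruct (Hs a b Hab) as [_ Ht].
  assert (Hl1 : loc (phi0 (twist a b)) = loc (phiE0 (cmp a b))).
  { rewrite loc_phi0, loc_phiE0, (c_loc_twist HC), l_ter, Ht; auto. }
  apply ginj.
  - rewrite (c_loc_mul HC'), loc_phi0, (c_loc_twist HC), <- l_ter by congruence.
    assert (E1 : loc (gmul (phiE0 a) (psi (lE a) (phiE0 b))) = loc (phiE0 a)) by (apply (c_loc_mul HC'); congruence).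
    rewrite (c_loc_mul HC'); rewrite ?E1; [symmetry; apply loc_phiE0 | congruence].
  - apply pe_cancel_r with (eplus (lE (cmp a b))).
    eapply pe_trans. apply pe_app. apply (FtoP T'). apply pe_sym, gen_mul; auto. apply pe_refl.
    rewrite <- app_assoc.
    change (gen (phi0 (twist a b)) ++ gen (phiE0 (cmp a b)) ++ eplus (lE (cmp a b)))
      with (wmap Fl (gen (twist a b) ++ eplus (cmp a b))).
    eapply pe_trans. apply Fl_FP. apply pe_sym, twist_rel; auto.
    rewrite l_cmp; auto. apply (FtoP T'). apply W5; auto.
Qed.


Lemma lm_mor : is_scwol_mor lm.
Proof.
  split; [|split].
  - intros a. apply l_ini.
  - intros a. apply l_ter.
  - intros a b H. apply l_cmp; auto.
Qed.

Lemma lam_mor : is_cog_mor lm lam.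
Proof.
  split; [|split; [|split; [|split]]].
  - intros x. apply loc_phi0.
  - intros x y H. apply ax2; auto.
  - intros a. apply loc_phiE0.
  - intros a x H. apply ax4; auto.
  - intros a b H. apply ax5; auto.
Qed.

Lemma Fl_FF u v : F u v -> F' (wmap Fl u) (wmap Fl v).
Proof.
  apply wmap_peq. intros l r [[x [y [Hl [-> ->]]]]|[[a [b [Hab [-> ->]]]]|[a [x [Hx [-> ->]]]]]].
  - change (wmap Fl (gen (gmul x y))) with (gen (phi0 (gmul x y)) ++ []).
    rewrite app_nil_r, ax2; auto. apply W2; auto.
  - change (wmap Fl (gen (twist a b) ++ eplus (cmp a b))) with
      (gen (phi0 (twist a b)) ++ (gen (phiE0 (cmp a b)) ++ eplus (lE (cmp a b))) ++ []).
    rewrite app_nil_r. eapply pe_trans. apply W5; auto.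
    rewrite <- ax5, <- l_cmp; auto. rewrite app_assoc. apply pe_app; [|apply pe_refl].
    apply pe_sym, gen_mul.
    destruct HY as [Hs _]. destruct (Hs a b Hab) as [_ Ht].
    rewrite loc_phi0, loc_phiE0, (c_loc_twist HC), l_ter, Ht; auto.
  - change (wmap Fl (gen (psi a x))) with (gen (phi0 (psi a x)) ++ []).
    rewrite app_nil_r, <- ax4; auto. apply pe_sym, W4; auto.
Qed.

Lemma kinv (b : V Y') (Z : word (letter C')) (q : FG C') : tpw b b Z -> q = cls F' Z ->
  choose (pone _) (fun h => kappa C' T' b h = q) = cls P' Z.
Proof.
  intros HZ Hq.
  assert (Hex : exists h, kappa C' T' b h = q).
  { exists (cls P' Z). rewrite Hq. unfold kappa. apply pcls_eq.
    eapply pe_trans. apply (kappa_PF b HY' HC' HT' HW'). apply pe_sym, prep_cls.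
    apply (kappa_loop HT' HW'); auto. }
  assert (H := choose_spec (pone (pi1rel C' T')) Hex). simpl in H.
  set (h1 := choose _ _) in *. rewrite Hq in H. unfold kappa in H. apply pcls_inj in H.
  rewrite <- (pcls_rep h1). apply pcls_eq.
  eapply pe_trans. apply pe_sym, (kappa_P b HT' HW'). apply (FtoP T'); auto.
Qed.

Lemma Lam_eq g : Lam lm lam T T' s0 g = Lambda g.
Proof.
  unfold Lam. set (K := wmap (kappa_letter T s0) (rep g)).
  assert (HK : tpw s0 s0 K) by apply (kappa_typed s0 HT HW).
  rewrite (@kinv (lV s0) (wmap Fl K)).
  - rewrite <- (pcls_rep (Lambda g)). apply pcls_eq.
    eapply pe_trans. apply Fl_Phi. eapply pe_trans. apply (Phi_tele HK). rewrite kk_s0. simpl. rewrite app_nil_r.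
    unfold K. rewrite (Rw_eq (kappa_P s0 HT HW (rep g))). unfold Rw. rewrite pcls_rep. apply pe_refl.
  - apply Fl_typed; auto.
  - unfold Flam, kappa. apply pcls_eq. apply Fl_FF. apply pe_sym, prep_cls.
Qed.

Lemma ufun_rep s : P' (rep (ufun lm lam T T' s0 s)) (kk s).
Proof.
  unfold ufun. set (pi := piw C T s0 s). set (pi' := piw C' T' (lV s0) (lV s)).
  rewrite (@kinv (lV s0) (wmap Fl pi ++ winv pi')).
  - eapply pe_trans. apply pe_sym, prep_cls.
    eapply pe_trans. apply pe_app. apply Fl_Phi. apply pe_winv, (pi_P C' (lV s0) HT' HW').
    simpl. rewrite app_nil_r. eapply pe_trans. apply Phi_tele. apply (pi_typed C s0 HT HW).
    rewrite kk_s0. simpl. unfold pi. rewrite (Rw_eq (pi_P C s0 HT HW s)).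
    generalize (pe_app Rw_nil (pe_refl (kk s))). simpl; auto.
  - apply tpw_app with (lV s). apply Fl_typed. apply (pi_typed C s0 HT HW).
    apply tpw_winv. apply (pi_typed C' (lV s0) HT' HW').
  - unfold pmul, Flam, pinv. apply pcls_eq. apply pe_app.
    + eapply pe_trans. apply pe_sym, prep_cls. apply Fl_FF. apply pe_sym, prep_cls.
    + eapply pe_trans. apply pe_sym, prep_cls. apply pe_winv. apply pe_sym, prep_cls.
Qed.

Lemma LV_eq v : mV L v = LlamV lm lam T T' s0 v.
Proof.
  rewrite (DV_rep v) at 1. rewrite LV_gen. unfold LlamV.
  apply (cos_eq' HC' (fun s => s)). eapply pe_trans; [|apply pe_sym, rep_pmul].
  rewrite Lam_eq. apply pe_app. apply pe_refl. apply pe_sym, ufun_rep.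
Qed.

Lemma LE_eq e : mE L e = LlamE lm lam T T' s0 e.
Proof.
  rewrite (DE_rep e) at 1. rewrite LE_gen. unfold LlamE.
  apply (cos_eq' HC' (@ini Y')). eapply pe_trans; [|apply pe_sym, rep_pmul].
  rewrite Lam_eq. apply pe_app. apply pe_refl. apply pe_sym, ufun_rep.
Qed.

End Main.

Theorem mainTheorem6 (Y Y' : scwol) (C : cog Y) (C' : cog Y')
  (T : E Y -> Prop) (T' : E Y' -> Prop)
  (L : scwol_mor (D C T) (D C' T')) (Lambda : pi1 C T -> pi1 C' T')
  (s0 : V Y) (s0' : V Y') :
  is_scwol Y -> is_scwol Y' -> connected Y -> connected Y' ->
  is_cog C -> is_cog C' -> developable C -> developable C' ->
  maximal_tree T -> maximal_tree T' ->
  is_scwol_mor L ->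
  (forall g h, Lambda (pmul g h) = pmul (Lambda g) (Lambda h)) ->
  (forall g v, mV L (DactV g v) = DactV (Lambda g) (mV L v)) ->
  (forall g e, mE L (DactE g e) = DactE (Lambda g) (mE L e)) ->
  mV L (cls (Dvrel C T) ([], s0)) = cls (Dvrel C' T') ([], s0') ->
  exists (l : scwol_mor Y Y') (lam : cog_mor C C'),
    is_scwol_mor l /\ is_cog_mor l lam /\ mV l s0 = s0' /\
    (forall v, mV L v = LlamV l lam T T' s0 v) /\
    (forall e, mE L e = LlamE l lam T T' s0 e) /\
    (forall g, Lambda g = Lam l lam T T' s0 g).
Proof.
  intros HY HY' Hc Hc' HC HC' Hdev Hdev' HT HT' HL Hhom HeqV HeqE Hbase.
  destruct (spanning HY Hc HT) as [W [HTW HW]]. destruct (spanning HY' Hc' HT') as [W' [HTW' HW']].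
  assert (Hs : lV L s0 = s0').
  { unfold lV. rewrite Hbase. apply (proj1 (cos_rep T' HC' (fun s => s) [] s0')). }
  assert (Hbase' : mV L (cls (Dvrel C T) ([], s0)) = cls (Dvrel C' T') ([], lV L s0)) by (rewrite Hs; auto).
  exists (lm L), (lam L Lambda s0).
  split; [|split; [|split; [|split; [|split]]]].
  - apply (lm_mor HY HY' HC HC' HL Hhom HeqV HeqE Hbase').
  - apply (lam_mor HY HY' HC HC' Hdev' HTW' HW' HL Hhom HeqV HeqE Hbase').
  - apply Hs.
  - apply (LV_eq HY HY' HC HC' Hdev' HTW HW HTW' HW' HL Hhom HeqV HeqE Hbase').
  - apply (LE_eq HY HY' HC HC' Hdev' HTW HW HTW' HW' HL Hhom HeqV HeqE Hbase').
  - intros g. symmetry. apply (Lam_eq HY HY' HC HC' Hdev' HTW HW HTW' HW' HL Hhom HeqV HeqE Hbase').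
Qed.
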